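(* Let $C$ be a formula in canonical form and let $M$ be a closed $\lambda\mu$-term (no free $\lambda$-variables and no free $\mu$-variables; free first-order variables are allowed) with $\vdash M:C\mid$ derivable. Then there exists a term $N$ in canonical normal form of type $C$ (in the empty contexts) such that $M=N$ in the equational theory $\beta\eta\mu\rho\theta$.
   Context: First-order language, terms and formulas: fix countably many function and relation symbols with arities and countably many first-order variables; terms $t ::= x \mid f\,t_1\dots t_k$; formulas $A ::= \top \mid \bot \mid X\,t_1\dots t_k \mid A\rightarrow A \mid A\wedge A \mid \forall x A$, up to renaming of bound variables. Atomic formulas are $\top$, $\bot$ and $X\vec t$. $\lambda\mu$-terms: $M ::= a \mid \lambda a.M \mid (M)M \mid \langle M,M\rangle \mid \pi_1 M \mid \pi_2 M \mid \star \mid [\alpha]M \mid \mu\alpha.M \mid \Lambda x.M \mid M\{t\}$ ($a$ $\lambda$-variables, $\alpha$ $\mu$-variables), up to $\alpha$-equivalence; $(M)N_1\dots N_k$ abbreviates left-nested applications, and similarly $b\{t_1\}\dots\{t_q\}$. Typing $\Gamma\vdash M:A\mid\Delta$: variable rule $\Gamma,a:A\vdash a:A\mid\Delta$; $\lambda$-abstraction/application for $\rightarrow$; $\star:\top$; pairing/projections for $\wedge$; from $\Gamma\vdash M:A\mid\Delta,\alpha:A$ infer $[\alpha]M:\bot$ (same contexts); from $\Gamma\vdash M:\bot\mid\Delta,\alpha:A$ infer $\Gamma\vdash\mu\alpha.M:A\mid\Delta$; from $\Gamma\vdash M:A\mid\Delta$, $x$ not free in $\Gamma,\Delta$, infer $\Lambda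 x.M:\forall xA$; from $M:\forall xA$ infer $M\{t\}:A[t/x]$. $\beta\eta\mu\rho\theta$ is the congruence on typed terms generated by $(\lambda a.M)N=M[N/a]$; $\lambda a.(M)a=M$ ($a\notin M$); $\pi_1\langle M,N\rangle=M$; $\pi_2\langle M,N\rangle=N$; $\langle\pi_1M,\pi_2M\rangle=M$; $\star=M$ for $M:\top$; $(\Lambda x.M)\{t\}=M[t/x]$; $\Lambda x.M\{x\}=M$ ($x$ not free in $M$); $(\mu\alpha.M)N=\mu\alpha.M[[\alpha](L)N/[\alpha]L]$; $\pi_i(\mu\alpha.M)=\mu\alpha.M[[\alpha]\pi_iL/[\alpha]L]$; $(\mu\alpha.M)\{t\}=\mu\alpha.M[[\alpha]L\{t\}/[\alpha]L]$; $[\beta]\mu\alpha.M=M[\beta/\alpha]$; $\mu\alpha.[\alpha]M=M$ ($\alpha\notin M$); $[\alpha]M=M$ when $M:\bot$; where $M[\mathcal C[L]/[\alpha]L]$ replaces each subterm $[\alpha]L$ by $\mathcal C[L]$. Canonical forms of formulas: grammar $\mathsf{R} ::= X\vec t \mid \bot$; $\mathsf{A} ::= \mathsf{R} \mid \mathsf{Q}\rightarrow\mathsf{A}$; $\mathsf{Q} ::= \mathsf{A} \mid \forall x\,\mathsf{Q}$; $\mathsf{B} ::= \mathsf{Q} \mid \mathsf{B}\wedge\mathsf{Q}$; $\mathsf{C} ::= \mathsf{B} \mid \top$. Formulas from $\mathsf{Q}$ are $\rightarrow$-canonical: $\forall x_1\dots\forall x_p(A_1\rightarrow\cdots\rightarrow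 A_n\rightarrow R)$ with $R\in\{\bot\}\cup\{X\vec t\}$ and each $A_i$ $\rightarrow$-canonical. Formulas from $\mathsf{C}$ are $\top$ or $(\dots(Q_1\wedge Q_2)\wedge\dots)\wedge Q_n$ ($n\ge1$) with $Q_i$ $\rightarrow$-canonical. Canonical normal forms (defined relative to contexts $\Gamma$ whose declared types are $\rightarrow$-canonical and $\Delta$): a canonical normal form of $\rightarrow$-canonical type $\forall x_1\dots\forall x_p(A_1\rightarrow\cdots\rightarrow A_n\rightarrow R)$ is a term $\Lambda x_1\dots\Lambda x_p.\lambda a_1\dots\lambda a_n.\mu\alpha[\beta](b\{t_1\}\dots\{t_q\})M_1\dots M_k$ where $a_i:A_i$ are fresh; $b$ is declared in $\Gamma$ or is one of the $a_i$, with type $\forall y_1\dots\forall y_q(B_1\rightarrow\cdots\rightarrow B_k\rightarrow S)$ ($S$ atomic); $t_1,\dots,t_q$ are first-order terms; each $M_j$ is a canonical normal form of type $B_j[\vec t/\vec y]$; $\alpha$ is a fresh $\mu$-variable of type $R$ and $\beta$ is a $\mu$-variable declared in $\Delta$ or equal to $\alpha$, of type $S[\vec t/\vec y]$; with the convention that ''$[\beta]$'' is omitted exactly when $S=\bot$ and ''$\mu\alpha$'' is omitted exactly when $R=\bot$. A canonical normal form of type $\top$ is $\star$; of type $(\dots(Q_1\wedge Q_2)\dots)\wedge Q_n$ ($n\ge1$) it is $\langle\dots\langle N_1,N_2\rangle\dots,N_n\rangle$ (just $N_1$ if $n=1$) with $N_i$ canonical normal forms of type $Q_i$. *)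

(* Defs.v *)
(* Syntax of first-order logic and of the lambda-mu calculus
   with de Bruijn indices for all three kinds of variables (first-order
   variables, lambda-variables, mu-variables); this realises "up to renaming of
   bound variables / alpha-equivalence".  The signature is given by two arity
   functions: function symbol f : nat has arity fa f, relation symbol X : nat
   has arity ra X. *)
From Stdlib Require Import List Arith.
Import ListNotations.

Definition scons {X : Type} (x : X) (f : nat -> X) (n : nat) : X :=
  match n with 0 => x | S n => f n end.

Definition upren (xi : nat -> nat) : nat -> nat := scons 0 (fun n => S (xi n)).

Inductive fterm : Type :=
| FVar : nat -> fterm
| FApp : nat -> list fterm -> fterm.

Fixpoint fren (xi : nat -> nat) (t : fterm) : fterm :=
  match t with
  | FVar n => FVar (xi n)
  | FApp f ts => FApp f (map (fren xi) ts)
  end.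

Fixpoint fsub (sg : nat -> fterm) (t : fterm) : fterm :=
  match t with
  | FVar n => sg n
  | FApp f ts => FApp f (map (fsub sg) ts)
  end.

Definition fup (sg : nat -> fterm) : nat -> fterm :=
  scons (FVar 0) (fun n => fren S (sg n)).

Fixpoint wf_fterm (fa : nat -> nat) (t : fterm) : Prop :=
  match t with
  | FVar _ => True
  | FApp f ts =>
      length ts = fa f /\
      (fix go (l : list fterm) : Prop :=
         match l with nil => True | u :: l' => wf_fterm fa u /\ go l' end) ts
  end.

Inductive formula : Type :=
| Top : formula
| Bot : formula
| Atom : nat -> list fterm -> formula
| Imp : formula -> formula -> formula
| And : formula -> formula -> formula
| All : formula -> formula.

Fixpoint Fren (xi : nat -> nat) (A : formula) : formula :=
  match A with
  | Top => Top
  | Bot => Bot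
  | Atom X ts => Atom X (map (fren xi) ts)
  | Imp A B => Imp (Fren xi A) (Fren xi B)
  | And A B => And (Fren xi A) (Fren xi B)
  | All A => All (Fren (upren xi) A)
  end.

Fixpoint Fsub (sg : nat -> fterm) (A : formula) : formula :=
  match A with
  | Top => Top
  | Bot => Bot
  | Atom X ts => Atom X (map (fsub sg) ts)
  | Imp A B => Imp (Fsub sg A) (Fsub sg B)
  | And A B => And (Fsub sg A) (Fsub sg B)
  | All A => All (Fsub (fup sg) A)
  end.

(* shift of free first-order variables (used for "x not free in Gamma, Delta") *)
Definition shiftF (A : formula) : formula := Fren S A.
(* A[t/x] where x is the variable bound by the outer quantifier *)
Definition inst0 (t : fterm) (A : formula) : formula := Fsub (scons t FVar) A.

Fixpoint wf_form (fa ra : nat -> nat) (A : formula) : Prop :=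
  match A with
  | Top | Bot => True
  | Atom X ts => length ts = ra X /\ Forall (wf_fterm fa) ts
  | Imp A B | And A B => wf_form fa ra A /\ wf_form fa ra B
  | All A => wf_form fa ra A
  end.

Definition atomic (A : formula) : Prop :=
  match A with Top | Bot | Atom _ _ => True | _ => False end.

Definition isR (A : formula) : Prop :=
  match A with Bot | Atom _ _ => True | _ => False end.

Inductive canA : formula -> Prop :=
| canA_R : forall R, isR R -> canA R
| canA_imp : forall Q A, canQ Q -> canA A -> canA (Imp Q A)
with canQ : formula -> Prop :=
| canQ_A : forall A, canA A -> canQ A
| canQ_all : forall Q, canQ Q -> canQ (All Q).

Inductive canB : formula -> Prop :=
| canB_Q : forall Q, canQ Q -> canB Q
| canB_and : forall B Q, canB B -> canQ Q -> canB (And B Q).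

Definition canC (C : formula) : Prop := canB C \/ C = Top.

Inductive term : Type :=
| Var : nat -> term
| Lam : term -> term
| App : term -> term -> term
| Pair : term -> term -> term
| Pi1 : term -> term
| Pi2 : term -> term
| Star : term
| Named : nat -> term -> term     (* [alpha]M *)
| Mu : term -> term               (* binds mu index 0 *)
| FLam : term -> term             (* Lambda x. M, binds first-order index 0 *)
| Inst : term -> fterm -> term.

Fixpoint tren_fo (xi : nat -> nat) (M : term) : term :=
  match M with
  | Var n => Var n
  | Lam M => Lam (tren_fo xi M)
  | App M N => App (tren_fo xi M) (tren_fo xi N)
  | Pair M N => Pair (tren_fo xi M) (tren_fo xi N)
  | Pi1 M => Pi1 (tren_fo xi M)
  | Pi2 M => Pi2 (tren_fo xi M)
  | Star => Star
  | Named a M => Named a (tren_fo xi M)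
  | Mu M => Mu (tren_fo xi M)
  | FLam M => FLam (tren_fo (upren xi) M)
  | Inst M t => Inst (tren_fo xi M) (fren xi t)
  end.

Fixpoint tsub_fo (sg : nat -> fterm) (M : term) : term :=
  match M with
  | Var n => Var n
  | Lam M => Lam (tsub_fo sg M)
  | App M N => App (tsub_fo sg M) (tsub_fo sg N)
  | Pair M N => Pair (tsub_fo sg M) (tsub_fo sg N)
  | Pi1 M => Pi1 (tsub_fo sg M)
  | Pi2 M => Pi2 (tsub_fo sg M)
  | Star => Star
  | Named a M => Named a (tsub_fo sg M)
  | Mu M => Mu (tsub_fo sg M)
  | FLam M => FLam (tsub_fo (fup sg) M)
  | Inst M t => Inst (tsub_fo sg M) (fsub sg t)
  end.

Fixpoint tren_lam (xi : nat -> nat) (M : term) : term :=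
  match M with
  | Var n => Var (xi n)
  | Lam M => Lam (tren_lam (upren xi) M)
  | App M N => App (tren_lam xi M) (tren_lam xi N)
  | Pair M N => Pair (tren_lam xi M) (tren_lam xi N)
  | Pi1 M => Pi1 (tren_lam xi M)
  | Pi2 M => Pi2 (tren_lam xi M)
  | Star => Star
  | Named a M => Named a (tren_lam xi M)
  | Mu M => Mu (tren_lam xi M)
  | FLam M => FLam (tren_lam xi M)
  | Inst M t => Inst (tren_lam xi M) t
  end.

Fixpoint tren_mu (xi : nat -> nat) (M : term) : term :=
  match M with
  | Var n => Var n
  | Lam M => Lam (tren_mu xi M)
  | App M N => App (tren_mu xi M) (tren_mu xi N)
  | Pair M N => Pair (tren_mu xi M) (tren_mu xi N)
  | Pi1 M => Pi1 (tren_mu xi M)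
  | Pi2 M => Pi2 (tren_mu xi M)
  | Star => Star
  | Named a M => Named (xi a) (tren_mu xi M)
  | Mu M => Mu (tren_mu (upren xi) M)
  | FLam M => FLam (tren_mu xi M)
  | Inst M t => Inst (tren_mu xi M) t
  end.

Fixpoint tsub_lam (sg : nat -> term) (M : term) : term :=
  match M with
  | Var n => sg n
  | Lam M => Lam (tsub_lam (scons (Var 0) (fun n => tren_lam S (sg n))) M)
  | App M N => App (tsub_lam sg M) (tsub_lam sg N)
  | Pair M N => Pair (tsub_lam sg M) (tsub_lam sg N)
  | Pi1 M => Pi1 (tsub_lam sg M)
  | Pi2 M => Pi2 (tsub_lam sg M)
  | Star => Star
  | Named a M => Named a (tsub_lam sg M)
  | Mu M => Mu (tsub_lam (fun n => tren_mu S (sg n)) M)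
  | FLam M => FLam (tsub_lam (fun n => tren_fo S (sg n)) M)
  | Inst M t => Inst (tsub_lam sg M) t
  end.

(* structural substitutions M[[alpha](L)N/[alpha]L], M[[alpha]pi_i L/[alpha]L],
   M[[alpha]L{t}/[alpha]L]; k is the current de Bruijn index of alpha. *)
Fixpoint ssub_app (k : nat) (N : term) (M : term) : term :=
  match M with
  | Var n => Var n
  | Lam M => Lam (ssub_app k (tren_lam S N) M)
  | App M1 M2 => App (ssub_app k N M1) (ssub_app k N M2)
  | Pair M1 M2 => Pair (ssub_app k N M1) (ssub_app k N M2)
  | Pi1 M => Pi1 (ssub_app k N M)
  | Pi2 M => Pi2 (ssub_app k N M)
  | Star => Star
  | Named a L =>
      if Nat.eqb a k then Named a (App (ssub_app k N L) N)
      else Named a (ssub_app k N L)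
  | Mu M => Mu (ssub_app (S k) (tren_mu S N) M)
  | FLam M => FLam (ssub_app k (tren_fo S N) M)
  | Inst M t => Inst (ssub_app k N M) t
  end.

Fixpoint ssub_proj (i : bool) (k : nat) (M : term) : term :=
  match M with
  | Var n => Var n
  | Lam M => Lam (ssub_proj i k M)
  | App M1 M2 => App (ssub_proj i k M1) (ssub_proj i k M2)
  | Pair M1 M2 => Pair (ssub_proj i k M1) (ssub_proj i k M2)
  | Pi1 M => Pi1 (ssub_proj i k M)
  | Pi2 M => Pi2 (ssub_proj i k M)
  | Star => Star
  | Named a L =>
      if Nat.eqb a k then
        Named a (if i then Pi1 (ssub_proj i k L) else Pi2 (ssub_proj i k L))
      else Named a (ssub_proj i k L)
  | Mu M => Mu (ssub_proj i (S k) M)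
  | FLam M => FLam (ssub_proj i k M)
  | Inst M t => Inst (ssub_proj i k M) t
  end.

Fixpoint ssub_inst (k : nat) (t : fterm) (M : term) : term :=
  match M with
  | Var n => Var n
  | Lam M => Lam (ssub_inst k t M)
  | App M1 M2 => App (ssub_inst k t M1) (ssub_inst k t M2)
  | Pair M1 M2 => Pair (ssub_inst k t M1) (ssub_inst k t M2)
  | Pi1 M => Pi1 (ssub_inst k t M)
  | Pi2 M => Pi2 (ssub_inst k t M)
  | Star => Star
  | Named a L =>
      if Nat.eqb a k then Named a (Inst (ssub_inst k t L) t)
      else Named a (ssub_inst k t L)
  | Mu M => Mu (ssub_inst (S k) t M)
  | FLam M => FLam (ssub_inst k (fren S t) M)
  | Inst M u => Inst (ssub_inst k t M) u
  end.

(* ---------- typing  Gamma |- M : A | Delta ----------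
   Gamma : types of lambda-variables (index n = n-th entry),
   Delta : types of mu-variables.  Formulas introduced in a derivation
   must be formulas of the language (well-formed w.r.t. the arities). *)
Inductive typ (fa ra : nat -> nat) :
  list formula -> list formula -> term -> formula -> Prop :=
| ty_var : forall G D n A, nth_error G n = Some A -> typ fa ra G D (Var n) A
| ty_lam : forall G D M A B, wf_form fa ra A -> typ fa ra (A :: G) D M B ->
    typ fa ra G D (Lam M) (Imp A B)
| ty_app : forall G D M N A B, typ fa ra G D M (Imp A B) -> typ fa ra G D N A ->
    typ fa ra G D (App M N) B
| ty_star : forall G D, typ fa ra G D Star Top
| ty_pair : forall G D M N A B, typ fa ra G D M A -> typ fa ra G D N B ->
    typ fa ra G D (Pair M N) (And A B)
| ty_pi1 : forall G D M A B, typ fa ra G D M (And A B) -> typ fa ra G D (Pi1 M) A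
| ty_pi2 : forall G D M A B, typ fa ra G D M (And A B) -> typ fa ra G D (Pi2 M) B
| ty_named : forall G D a M A, nth_error D a = Some A -> typ fa ra G D M A ->
    typ fa ra G D (Named a M) Bot
| ty_mu : forall G D M A, wf_form fa ra A -> typ fa ra G (A :: D) M Bot ->
    typ fa ra G D (Mu M) A
| ty_flam : forall G D M A, typ fa ra (map shiftF G) (map shiftF D) M A ->
    typ fa ra G D (FLam M) (All A)
| ty_inst : forall G D M A t, wf_fterm fa t -> typ fa ra G D M (All A) ->
    typ fa ra G D (Inst M t) (inst0 t A).

(* ---------- the typed congruence beta eta mu rho theta ----------
   eqt fa ra G D M N A  :  G |- M = N : A | D *)
Inductive eqt (fa ra : nat -> nat) :
  list formula -> list formula -> term -> term -> formula -> Prop :=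
| eq_refl : forall G D M A, typ fa ra G D M A -> eqt fa ra G D M M A
| eq_sym : forall G D M N A, eqt fa ra G D M N A -> eqt fa ra G D N M A
| eq_trans : forall G D M N P A, eqt fa ra G D M N A -> eqt fa ra G D N P A ->
    eqt fa ra G D M P A
| eq_lam : forall G D M M' A B, wf_form fa ra A -> eqt fa ra (A :: G) D M M' B ->
    eqt fa ra G D (Lam M) (Lam M') (Imp A B)
| eq_app : forall G D M M' N N' A B, eqt fa ra G D M M' (Imp A B) ->
    eqt fa ra G D N N' A -> eqt fa ra G D (App M N) (App M' N') B
| eq_pair : forall G D M M' N N' A B, eqt fa ra G D M M' A -> eqt fa ra G D N N' B ->
    eqt fa ra G D (Pair M N) (Pair M' N') (And A B)
| eq_pi1 : forall G D M M' A B, eqt fa ra G D M M' (And A B) ->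
    eqt fa ra G D (Pi1 M) (Pi1 M') A
| eq_pi2 : forall G D M M' A B, eqt fa ra G D M M' (And A B) ->
    eqt fa ra G D (Pi2 M) (Pi2 M') B
| eq_named : forall G D a M M' A, nth_error D a = Some A -> eqt fa ra G D M M' A ->
    eqt fa ra G D (Named a M) (Named a M') Bot
| eq_mu : forall G D M M' A, wf_form fa ra A -> eqt fa ra G (A :: D) M M' Bot ->
    eqt fa ra G D (Mu M) (Mu M') A
| eq_flam : forall G D M M' A, eqt fa ra (map shiftF G) (map shiftF D) M M' A ->
    eqt fa ra G D (FLam M) (FLam M') (All A)
| eq_inst : forall G D M M' A t, wf_fterm fa t -> eqt fa ra G D M M' (All A) ->
    eqt fa ra G D (Inst M t) (Inst M' t) (inst0 t A)
| ax_beta : forall G D M N B, typ fa ra G D (App (Lam M) N) B ->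
    eqt fa ra G D (App (Lam M) N) (tsub_lam (scons N Var) M) B
| ax_eta : forall G D M A B, typ fa ra G D M (Imp A B) ->
    eqt fa ra G D (Lam (App (tren_lam S M) (Var 0))) M (Imp A B)
| ax_pi1 : forall G D M N A, typ fa ra G D (Pi1 (Pair M N)) A ->
    eqt fa ra G D (Pi1 (Pair M N)) M A
| ax_pi2 : forall G D M N A, typ fa ra G D (Pi2 (Pair M N)) A ->
    eqt fa ra G D (Pi2 (Pair M N)) N A
| ax_surj : forall G D M A B, typ fa ra G D M (And A B) ->
    eqt fa ra G D (Pair (Pi1 M) (Pi2 M)) M (And A B)
| ax_top : forall G D M, typ fa ra G D M Top -> eqt fa ra G D Star M Top
| ax_theta : forall G D M t A, typ fa ra G D (Inst (FLam M) t) A ->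
    eqt fa ra G D (Inst (FLam M) t) (tsub_fo (scons t FVar) M) A
| ax_eta_all : forall G D M A, typ fa ra G D M (All A) ->
    eqt fa ra G D (FLam (Inst (tren_fo S M) (FVar 0))) M (All A)
| ax_mu_app : forall G D M N B, typ fa ra G D (App (Mu M) N) B ->
    eqt fa ra G D (App (Mu M) N) (Mu (ssub_app 0 (tren_mu S N) M)) B
| ax_mu_pi1 : forall G D M A, typ fa ra G D (Pi1 (Mu M)) A ->
    eqt fa ra G D (Pi1 (Mu M)) (Mu (ssub_proj true 0 M)) A
| ax_mu_pi2 : forall G D M A, typ fa ra G D (Pi2 (Mu M)) A ->
    eqt fa ra G D (Pi2 (Mu M)) (Mu (ssub_proj false 0 M)) A
| ax_mu_inst : forall G D M t A, typ fa ra G D (Inst (Mu M) t) A ->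
    eqt fa ra G D (Inst (Mu M) t) (Mu (ssub_inst 0 t M)) A
| ax_rho : forall G D b M, typ fa ra G D (Named b (Mu M)) Bot ->
    eqt fa ra G D (Named b (Mu M)) (tren_mu (scons b (fun n => n)) M) Bot
| ax_eta_mu : forall G D M A, typ fa ra G D M A ->
    eqt fa ra G D (Mu (Named 0 (tren_mu S M))) M A
| ax_bot : forall G D a M, nth_error D a = Some Bot -> typ fa ra G D M Bot ->
    eqt fa ra G D (Named a M) M Bot.

(* the closing part "mu alpha [beta]" of the body of a canonical normal form:
   [beta] is omitted exactly when S = bot; Dl is the mu-context in scope. *)
Definition head_close (Dl : list formula) (P : term) (S : formula) (M : term) : Prop :=
  (S = Bot /\ M = P) \/
  (S <> Bot /\ exists beta, nth_error Dl beta = Some S /\ M = Named beta P).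

(* cnfQ fa G D M Q : M is a canonical normal form of the ->-canonical type Q
   relative to G, D.
   spine fa G D h T P S : P = (h{t1}...{tq}) M1 ... Mk where h : T with
   T = forall y1..yq (B1 -> ... -> Bk -> S0), each Mj is a canonical normal
   form of type Bj[t/y], and S = S0[t/y] is atomic. *)
Inductive cnfQ (fa : nat -> nat) :
  list formula -> list formula -> term -> formula -> Prop :=
| cnf_all : forall G D M Q, cnfQ fa (map shiftF G) (map shiftF D) M Q ->
    cnfQ fa G D (FLam M) (All Q)
| cnf_imp : forall G D M A B, cnfQ fa (A :: G) D M B ->
    cnfQ fa G D (Lam M) (Imp A B)
| cnf_bot : forall G D b T P S M, nth_error G b = Some T ->
    spine fa G D (Var b) T P S -> head_close D P S M ->
    cnfQ fa G D M Bot
| cnf_atom : forall G D X ts b T P S M, nth_error G b = Some T ->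
    spine fa G (Atom X ts :: D) (Var b) T P S -> head_close (Atom X ts :: D) P S M ->
    cnfQ fa G D (Mu M) (Atom X ts)
with spine (fa : nat -> nat) :
  list formula -> list formula -> term -> formula -> term -> formula -> Prop :=
| sp_end : forall G D h S, atomic S -> spine fa G D h S h S
| sp_inst : forall G D h T t P S, wf_fterm fa t ->
    spine fa G D (Inst h t) (inst0 t T) P S -> spine fa G D h (All T) P S
| sp_app : forall G D h B T N P S, cnfQ fa G D N B ->
    spine fa G D (App h N) T P S -> spine fa G D h (Imp B T) P S.

Inductive cnfB (fa : nat -> nat) (G D : list formula) : term -> formula -> Prop :=
| cnfB_one : forall M Q, cnfQ fa G D M Q -> cnfB fa G D M Q
| cnfB_and : forall M N B Q, cnfB fa G D M B -> cnfQ fa G D N Q ->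
    cnfB fa G D (Pair M N) (And B Q).

Definition cnfC (fa : nat -> nat) (G D : list formula) (M : term) (C : formula) : Prop :=
  (C = Top /\ M = Star) \/ cnfB fa G D M C.

(* Main.v *)
Require Import Defs.
From Stdlib Require Import List.
From Stdlib Require Import Arith Lia FunctionalExtensionality.
Import ListNotations.


Section FtermInd.
Variable P : fterm -> Prop.
Hypothesis HV : forall n, P (FVar n).
Hypothesis HA : forall f ts, Forall P ts -> P (FApp f ts).
Fixpoint fterm_ind' (t : fterm) : P t :=
  match t with
  | FVar n => HV n
  | FApp f ts => HA f ts
      ((fix go (l : list fterm) : Forall P l :=
         match l with nil => Forall_nil _ | u :: l' => Forall_cons _ (fterm_ind' u) (go l') end) ts)
  end.
End FtermInd.

Lemma fren_fsub xi t : fren xi t = fsub (fun n => FVar (xi n)) t.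
Proof.
  induction t using fterm_ind'; simpl; auto.
  f_equal. induction H; simpl; f_equal; auto.
Qed.

Lemma fsub_fsub s1 s2 t : fsub s2 (fsub s1 t) = fsub (fun n => fsub s2 (s1 n)) t.
Proof.
  induction t using fterm_ind'; simpl; auto.
  f_equal. rewrite map_map. induction H; simpl; f_equal; auto.
Qed.

Lemma fsub_id t : fsub FVar t = t.
Proof.
  induction t using fterm_ind'; simpl; auto.
  f_equal. induction H; simpl; f_equal; auto.
Qed.

Lemma fsub_ext s1 s2 t : (forall n, s1 n = s2 n) -> fsub s1 t = fsub s2 t.
Proof. intros H. f_equal. apply functional_extensionality; auto. Qed.

Lemma wf_FApp fa f ts : wf_fterm fa (FApp f ts) <-> length ts = fa f /\ Forall (wf_fterm fa) ts.
Proof.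
  simpl. split; intros [H1 H2]; split; auto.
  - clear H1. induction ts; simpl in *; constructor; tauto.
  - clear H1. induction H2; simpl; tauto.
Qed.

Lemma wf_fsub fa s t : (forall n, wf_fterm fa (s n)) -> wf_fterm fa t -> wf_fterm fa (fsub s t).
Proof.
  intros Hs. induction t using fterm_ind'; simpl; auto.
  intros Hw. apply wf_FApp in Hw. apply wf_FApp. destruct Hw as [Hl Hf].
  split. rewrite length_map; auto.
  clear Hl. induction H; simpl; inversion Hf; subst; constructor; auto.
Qed.

Lemma wf_fren fa xi t : wf_fterm fa t -> wf_fterm fa (fren xi t).
Proof. intros; rewrite fren_fsub; apply wf_fsub; simpl; auto. Qed.

Definition fcomp (s1 s2 : nat -> fterm) : nat -> fterm := fun n => fsub s2 (s1 n).

Lemma fup_ren xi : fup (fun n => FVar (xi n)) = (fun n => FVar (upren xi n)).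
Proof. apply functional_extensionality; intros [|n]; reflexivity. Qed.

Lemma Fren_Fsub xi A : Fren xi A = Fsub (fun n => FVar (xi n)) A.
Proof.
  revert xi; induction A; intros xi; simpl; f_equal; auto.
  - apply map_ext; intros; apply fren_fsub.
  - rewrite IHA. rewrite fup_ren. reflexivity.
Qed.

Lemma fup_comp s1 s2 : fcomp (fup s1) (fup s2) = fup (fcomp s1 s2).
Proof.
  apply functional_extensionality; intros [|n]; unfold fcomp; simpl; auto.
  rewrite !fren_fsub, !fsub_fsub. apply fsub_ext. intros m. simpl.
  rewrite fren_fsub. reflexivity.
Qed.

Lemma Fsub_Fsub s1 s2 A : Fsub s2 (Fsub s1 A) = Fsub (fcomp s1 s2) A.
Proof.
  revert s1 s2; induction A; intros s1 s2; simpl; f_equal; auto.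
  - rewrite map_map. apply map_ext; intros; apply fsub_fsub.
  - rewrite IHA, fup_comp. reflexivity.
Qed.

Lemma fup_id : fup FVar = FVar.
Proof. apply functional_extensionality; intros [|n]; reflexivity. Qed.

Lemma Fsub_id A : Fsub FVar A = A.
Proof.
  induction A; simpl; f_equal; auto.
  - rewrite <- (map_id l) at 2. apply map_ext; apply fsub_id.
  - rewrite fup_id; auto.
Qed.

Lemma Fren_Fren x1 x2 A : Fren x2 (Fren x1 A) = Fren (fun n => x2 (x1 n)) A.
Proof. rewrite !Fren_Fsub, Fsub_Fsub. f_equal. Qed.

Lemma upren_id : upren (fun n => n) = (fun n => n).
Proof. apply functional_extensionality; intros [|n]; reflexivity. Qed.

Lemma Fren_id A : Fren (fun n => n) A = A.
Proof. rewrite Fren_Fsub. apply Fsub_id. Qed.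

Lemma wf_Fsub fa ra s A : (forall n, wf_fterm fa (s n)) -> wf_form fa ra A -> wf_form fa ra (Fsub s A).
Proof.
  revert s; induction A; intros s Hs; simpl; intuition.
  - rewrite length_map; auto.
  - apply Forall_map. eapply Forall_impl; [|eauto]. intros; apply wf_fsub; auto.
  - apply IHA; auto. intros [|n]; simpl; auto. apply wf_fren; auto.
Qed.

Lemma wf_Fren fa ra xi A : wf_form fa ra A -> wf_form fa ra (Fren xi A).
Proof. intros; rewrite Fren_Fsub; apply wf_Fsub; simpl; auto. Qed.

Lemma Fsub_inst0 s t A : Fsub s (inst0 t A) = inst0 (fsub s t) (Fsub (fup s) A).
Proof.
  unfold inst0. rewrite !Fsub_Fsub. f_equal. apply functional_extensionality; intros [|n];
  unfold fcomp; simpl; auto. rewrite fren_fsub, fsub_fsub. simpl. rewrite fsub_id. auto.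
Qed.

Lemma Fren_inst0 xi t A : Fren xi (inst0 t A) = inst0 (fren xi t) (Fren (upren xi) A).
Proof. rewrite !Fren_Fsub, Fsub_inst0, fup_ren, fren_fsub. auto. Qed.

Lemma inst0_shift_var A : inst0 (FVar 0) (Fren (upren S) A) = A.
Proof.
  unfold inst0. rewrite Fren_Fsub, Fsub_Fsub. rewrite <- (Fsub_id A) at 2. f_equal.
  apply functional_extensionality; intros [|n]; reflexivity.
Qed.

Fixpoint fsize (A : formula) : nat :=
  match A with
  | Top | Bot | Atom _ _ => 1
  | Imp A B | And A B => S (fsize A + fsize B)
  | All A => S (fsize A)
  end.

Lemma fsize_Fsub s A : fsize (Fsub s A) = fsize A.
Proof. revert s; induction A; intros; simpl; auto. Qed.
Lemma fsize_Fren xi A : fsize (Fren xi A) = fsize A.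
Proof. rewrite Fren_Fsub; apply fsize_Fsub. Qed.
Lemma fsize_inst0 t A : fsize (inst0 t A) = fsize A.
Proof. apply fsize_Fsub. Qed.
Lemma fsize_pos A : 1 <= fsize A.
Proof. destruct A; simpl; lia. Qed.


Fixpoint ren (xf xl xm : nat -> nat) (M : term) : term :=
  match M with
  | Var n => Var (xl n)
  | Lam M => Lam (ren xf (upren xl) xm M)
  | App M N => App (ren xf xl xm M) (ren xf xl xm N)
  | Pair M N => Pair (ren xf xl xm M) (ren xf xl xm N)
  | Pi1 M => Pi1 (ren xf xl xm M)
  | Pi2 M => Pi2 (ren xf xl xm M)
  | Star => Star
  | Named a M => Named (xm a) (ren xf xl xm M)
  | Mu M => Mu (ren xf xl (upren xm) M)
  | FLam M => FLam (ren (upren xf) xl xm M)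
  | Inst M t => Inst (ren xf xl xm M) (fren xf t)
  end.

Inductive frame := FrA (N : term) | FrP1 | FrP2 | FrI (t : fterm).
Definition stk := (list frame * option nat)%type.

Definition apf (f : frame) (L : term) : term :=
  match f with FrA N => App L N | FrP1 => Pi1 L | FrP2 => Pi2 L | FrI t => Inst L t end.
Definition plugF (F : list frame) (L : term) : term := fold_left (fun L f => apf f L) F L.
Definition plug (E : stk) (L : term) : term :=
  match snd E with None => plugF (fst E) L | Some b => Named b (plugF (fst E) L) end.

Definition ren_frame xf xl xm (f : frame) : frame :=
  match f with FrA N => FrA (ren xf xl xm N) | FrI t => FrI (fren xf t) | f => f end.
Definition ren_stk xf xl xm (E : stk) : stk :=
  (map (ren_frame xf xl xm) (fst E), option_map xm (snd E)).

Definition idn : nat -> nat := fun n => n.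

Definition upl_l (sl : nat -> term) := scons (Var 0) (fun n => ren idn S idn (sl n)).
Definition upl_m (sm : nat -> stk) := fun a => ren_stk idn S idn (sm a).
Definition upm_l (sl : nat -> term) := fun n => ren idn idn S (sl n).
Definition upm_m (sm : nat -> stk) : nat -> stk :=
  scons ([], Some 0) (fun a => ren_stk idn idn S (sm a)).
Definition upf_l (sl : nat -> term) := fun n => ren S idn idn (sl n).
Definition upf_m (sm : nat -> stk) := fun a => ren_stk S idn idn (sm a).

Fixpoint subst (sf : nat -> fterm) (sl : nat -> term) (sm : nat -> stk) (M : term) : term :=
  match M with
  | Var n => sl n
  | Lam M => Lam (subst sf (upl_l sl) (upl_m sm) M)
  | App M N => App (subst sf sl sm M) (subst sf sl sm N)
  | Pair M N => Pair (subst sf sl sm M) (subst sf sl sm N)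
  | Pi1 M => Pi1 (subst sf sl sm M)
  | Pi2 M => Pi2 (subst sf sl sm M)
  | Star => Star
  | Named a M => plug (sm a) (subst sf sl sm M)
  | Mu M => Mu (subst sf (upm_l sl) (upm_m sm) M)
  | FLam M => FLam (subst (fup sf) (upf_l sl) (upf_m sm) M)
  | Inst M t => Inst (subst sf sl sm M) (fsub sf t)
  end.

Definition sub_frame sf sl sm (f : frame) : frame :=
  match f with FrA N => FrA (subst sf sl sm N) | FrI t => FrI (fsub sf t) | f => f end.
Definition stk_subst sf sl sm (E : stk) : stk :=
  match snd E with
  | None => (map (sub_frame sf sl sm) (fst E), None)
  | Some b => (map (sub_frame sf sl sm) (fst E) ++ fst (sm b), snd (sm b))
  end.

Lemma plugF_app F1 F2 L : plugF (F1 ++ F2) L = plugF F2 (plugF F1 L).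
Proof. unfold plugF; apply fold_left_app. Qed.

Lemma plugF_ren xf xl xm F L :
  ren xf xl xm (plugF F L) = plugF (map (ren_frame xf xl xm) F) (ren xf xl xm L).
Proof. revert L; induction F as [|f F IH]; intros L; simpl; auto. rewrite IH. destruct f; reflexivity. Qed.

Lemma plug_ren xf xl xm E L :
  ren xf xl xm (plug E L) = plug (ren_stk xf xl xm E) (ren xf xl xm L).
Proof. destruct E as [F [b|]]; unfold plug; simpl; rewrite plugF_ren; auto. Qed.

Lemma plugF_subst sf sl sm F L :
  subst sf sl sm (plugF F L) = plugF (map (sub_frame sf sl sm) F) (subst sf sl sm L).
Proof. revert L; induction F as [|f F IH]; intros L; simpl; auto. rewrite IH. destruct f; reflexivity. Qed.

Lemma plug_subst sf sl sm E L :
  subst sf sl sm (plug E L) = plug (stk_subst sf sl sm E) (subst sf sl sm L).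
Proof.
  destruct E as [F [b|]]; unfold plug, stk_subst; simpl; rewrite plugF_subst; auto.
  rewrite plugF_app. reflexivity.
Qed.

Lemma upren_comp (x y : nat -> nat) : (fun n => upren y (upren x n)) = upren (fun n => y (x n)).
Proof. apply functional_extensionality; intros [|n]; reflexivity. Qed.

Lemma ren_ren xf xl xm yf yl ym M :
  ren yf yl ym (ren xf xl xm M) = ren (fun n => yf (xf n)) (fun n => yl (xl n)) (fun n => ym (xm n)) M.
Proof.
  revert xf xl xm yf yl ym; induction M; intros; simpl; f_equal; auto;
  try (rewrite IHM; f_equal; apply upren_comp).
  rewrite fren_fsub, !fren_fsub, fsub_fsub. reflexivity.
Qed.

Lemma ren_stk_ren_stk xf xl xm yf yl ym E :
  ren_stk yf yl ym (ren_stk xf xl xm E) =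
  ren_stk (fun n => yf (xf n)) (fun n => yl (xl n)) (fun n => ym (xm n)) E.
Proof.
  destruct E as [F e]; unfold ren_stk; simpl. f_equal.
  - rewrite map_map. apply map_ext. intros []; simpl; auto. rewrite ren_ren; auto.
    rewrite !fren_fsub, fsub_fsub; auto.
  - destruct e; auto.
Qed.

Ltac fext := apply functional_extensionality; intros [|?]; reflexivity.

Lemma ren_is_subst xf xl xm M :
  ren xf xl xm M = subst (fun n => FVar (xf n)) (fun n => Var (xl n)) (fun a => ([], Some (xm a))) M.
Proof.
  revert xf xl xm; induction M; intros; simpl; rewrite ?IHM, ?IHM1, ?IHM2; auto.
  - f_equal. f_equal; fext.
  - f_equal. f_equal; fext.
  - f_equal. f_equal; fext.
  - f_equal. apply fren_fsub.
Qed.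

Lemma subst_ren sf sl sm xf xl xm M :
  subst sf sl sm (ren xf xl xm M) =
  subst (fun n => sf (xf n)) (fun n => sl (xl n)) (fun n => sm (xm n)) M.
Proof.
  revert sf sl sm xf xl xm; induction M; intros; simpl; f_equal; auto.
  - rewrite IHM. f_equal; apply functional_extensionality; intros [|n]; reflexivity.
  - rewrite IHM. f_equal; apply functional_extensionality; intros [|n]; reflexivity.
  - rewrite IHM. f_equal; apply functional_extensionality; intros [|n]; reflexivity.
  - rewrite fren_fsub, fsub_fsub. reflexivity.
Qed.

Lemma map_sub_frame_ren sf sl sm xf xl xm F :
  map (sub_frame sf sl sm) (map (ren_frame xf xl xm) F) =
  map (sub_frame (fun n => sf (xf n)) (fun n => sl (xl n)) (fun n => sm (xm n))) F.
Proof.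
  rewrite map_map. apply map_ext. intros []; simpl; auto.
  - rewrite subst_ren; auto.
  - rewrite fren_fsub, fsub_fsub; auto.
Qed.

Lemma stk_subst_ren sf sl sm xf xl xm E :
  stk_subst sf sl sm (ren_stk xf xl xm E) =
  stk_subst (fun n => sf (xf n)) (fun n => sl (xl n)) (fun n => sm (xm n)) E.
Proof.
  destruct E as [F [b|]]; unfold stk_subst, ren_stk; simpl; rewrite map_sub_frame_ren; auto.
Qed.

Lemma ren_subst sf sl sm xf xl xm M :
  ren xf xl xm (subst sf sl sm M) =
  subst (fcomp sf (fun n => FVar (xf n))) (fun n => ren xf xl xm (sl n))
        (fun a => ren_stk xf xl xm (sm a)) M.
Proof.
  revert sf sl sm xf xl xm; induction M; intros; simpl.
  - reflexivity.
  - rewrite IHM. f_equal. f_equal; apply functional_extensionality; intros [|n];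
    unfold upl_l, upl_m; simpl; rewrite ?ren_ren, ?ren_stk_ren_stk; reflexivity.
  - rewrite IHM1, IHM2; auto.
  - rewrite IHM1, IHM2; auto.
  - rewrite IHM; auto.
  - rewrite IHM; auto.
  - auto.
  - rewrite plug_ren, IHM; auto.
  - rewrite IHM. f_equal. f_equal; apply functional_extensionality; intros [|n];
    unfold upm_l, upm_m; simpl; rewrite ?ren_ren, ?ren_stk_ren_stk; reflexivity.
  - rewrite IHM. f_equal. f_equal.
    + rewrite <- fup_ren, fup_comp; auto.
    + apply functional_extensionality; intros n; unfold upf_l; rewrite !ren_ren; reflexivity.
    + apply functional_extensionality; intros n; unfold upf_m; rewrite !ren_stk_ren_stk; reflexivity.
  - rewrite IHM, fren_fsub, fsub_fsub; auto.
Qed.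

Lemma ren_stk_subst sf sl sm xf xl xm E :
  ren_stk xf xl xm (stk_subst sf sl sm E) =
  stk_subst (fcomp sf (fun n => FVar (xf n))) (fun n => ren xf xl xm (sl n))
        (fun a => ren_stk xf xl xm (sm a)) E.
Proof.
  assert (HF : forall F, map (ren_frame xf xl xm) (map (sub_frame sf sl sm) F) =
     map (sub_frame (fcomp sf (fun n => FVar (xf n))) (fun n => ren xf xl xm (sl n))
        (fun a => ren_stk xf xl xm (sm a))) F).
  { intros F. rewrite map_map. apply map_ext. intros []; simpl; auto.
    - rewrite ren_subst; auto.
    - rewrite fren_fsub, fsub_fsub; auto. }
  destruct E as [F [b|]]; unfold stk_subst, ren_stk; simpl.
  - rewrite map_app, HF. auto.
  - rewrite HF; auto.
Qed.

Lemma subst_subst sf sl sm tf tl tm M :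
  subst tf tl tm (subst sf sl sm M) =
  subst (fcomp sf tf) (fun n => subst tf tl tm (sl n)) (fun a => stk_subst tf tl tm (sm a)) M.
Proof.
  revert sf sl sm tf tl tm; induction M; intros; simpl.
  - reflexivity.
  - rewrite IHM. f_equal. f_equal; apply functional_extensionality; intros [|n];
    unfold upl_l, upl_m; simpl; auto.
    + rewrite subst_ren, ren_subst. f_equal.
      apply functional_extensionality; intros; unfold fcomp; simpl; rewrite fsub_id; auto.
    + rewrite stk_subst_ren, ren_stk_subst. f_equal.
      apply functional_extensionality; intros; unfold fcomp; simpl; rewrite fsub_id; auto.
    + rewrite stk_subst_ren, ren_stk_subst. f_equal.
      apply functional_extensionality; intros; unfold fcomp; simpl; rewrite fsub_id; auto.
  - rewrite IHM1, IHM2; auto.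
  - rewrite IHM1, IHM2; auto.
  - rewrite IHM; auto.
  - rewrite IHM; auto.
  - auto.
  - rewrite plug_subst, IHM; auto.
  - rewrite IHM. f_equal. f_equal; apply functional_extensionality; intros [|n];
    unfold upm_l, upm_m; simpl; auto.
    + rewrite subst_ren, ren_subst. f_equal.
      apply functional_extensionality; intros; unfold fcomp; simpl; rewrite fsub_id; auto.
    + rewrite subst_ren, ren_subst. f_equal.
      apply functional_extensionality; intros; unfold fcomp; simpl; rewrite fsub_id; auto.
    + rewrite stk_subst_ren, ren_stk_subst. f_equal.
      apply functional_extensionality; intros; unfold fcomp; simpl; rewrite fsub_id; auto.
  - rewrite IHM. f_equal. f_equal.
    + apply fup_comp.
    + apply functional_extensionality; intros n; unfold upf_l.
      rewrite subst_ren, ren_subst. f_equal.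
      apply functional_extensionality; intros; unfold fcomp; simpl; rewrite fren_fsub; auto.
    + apply functional_extensionality; intros n; unfold upf_m.
      rewrite stk_subst_ren, ren_stk_subst. f_equal.
      apply functional_extensionality; intros; unfold fcomp; simpl; rewrite fren_fsub; auto.
  - rewrite IHM, fsub_fsub; auto.
Qed.


Definition idstk : nat -> stk := fun a => ([], Some a).

Lemma upren_idn : upren idn = idn.
Proof. apply functional_extensionality; intros [|n]; reflexivity. Qed.

Lemma fren_id t : fren idn t = t.
Proof. rewrite fren_fsub. apply fsub_id. Qed.

Lemma ren_id M : ren idn idn idn M = M.
Proof.
  induction M; simpl; rewrite ?upren_idn, ?IHM, ?IHM1, ?IHM2, ?fren_id; auto.
Qed.

Lemma subst_id M : subst FVar Var idstk M = M.
Proof. rewrite <- (ren_id M) at 2. rewrite ren_is_subst. reflexivity. Qed.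

Lemma tren_lam_ren xi M : tren_lam xi M = ren idn xi idn M.
Proof.
  revert xi; induction M; intros; simpl; rewrite ?upren_idn, ?IHM, ?IHM1, ?IHM2, ?fren_id; auto.
Qed.
Lemma tren_mu_ren xi M : tren_mu xi M = ren idn idn xi M.
Proof.
  revert xi; induction M; intros; simpl; rewrite ?upren_idn, ?IHM, ?IHM1, ?IHM2, ?fren_id; auto.
Qed.
Lemma tren_fo_ren xi M : tren_fo xi M = ren xi idn idn M.
Proof.
  revert xi; induction M; intros; simpl; rewrite ?upren_idn, ?IHM, ?IHM1, ?IHM2, ?fren_id; auto.
Qed.

Lemma tsub_lam_subst sg M : tsub_lam sg M = subst FVar sg idstk M.
Proof.
  revert sg; induction M; intros; simpl; rewrite ?IHM, ?IHM1, ?IHM2, ?fsub_id; auto.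
  - f_equal. f_equal; apply functional_extensionality; intros [|n]; simpl; auto.
    unfold upl_l; simpl. rewrite tren_lam_ren; auto.
  - f_equal. f_equal; apply functional_extensionality; intros [|n]; simpl; auto;
    unfold upm_l; rewrite tren_mu_ren; auto.
  - rewrite fup_id. f_equal. f_equal; apply functional_extensionality; intros [|n]; simpl; auto;
    unfold upf_l; rewrite tren_fo_ren; auto.
Qed.

Lemma tsub_fo_subst sg M : tsub_fo sg M = subst sg Var idstk M.
Proof.
  revert sg; induction M; intros; simpl; rewrite ?IHM, ?IHM1, ?IHM2; auto;
  f_equal; f_equal; apply functional_extensionality; intros [|n]; reflexivity.
Qed.

Ltac deq := match goal with |- context [Nat.eqb ?a ?b] => destruct (Nat.eqb a b) end.

Definition app_stk k N : nat -> stk := fun a => if Nat.eqb a k then ([FrA N], Some a) else ([], Some a).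
Definition proj_stk (i : bool) k : nat -> stk :=
  fun a => if Nat.eqb a k then ([if i then FrP1 else FrP2], Some a) else ([], Some a).
Definition inst_stk k t : nat -> stk := fun a => if Nat.eqb a k then ([FrI t], Some a) else ([], Some a).

Lemma ssub_app_subst k N M : ssub_app k N M = subst FVar Var (app_stk k N) M.
Proof.
  revert k N; induction M; intros; simpl; rewrite ?IHM, ?IHM1, ?IHM2, ?fsub_id; auto.
  - f_equal. f_equal; try fext; apply functional_extensionality; intros a;
    unfold upl_m, app_stk; destruct (a =? k); simpl; rewrite ?tren_lam_ren; auto.
  - unfold app_stk. destruct (n =? k); reflexivity.
  - f_equal. f_equal; try fext; apply functional_extensionality; intros [|a]; [reflexivity|].
    unfold upm_m, app_stk. unfold scons. cbv beta iota. change (S a =? S k) with (a =? k).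
    destruct (a =? k); simpl; rewrite ?tren_mu_ren; auto.
  - rewrite fup_id. f_equal. f_equal; try fext; apply functional_extensionality; intros a;
    unfold upf_m, app_stk; destruct (a =? k); simpl; rewrite ?tren_fo_ren; auto.
Qed.

Lemma ssub_proj_subst i k M : ssub_proj i k M = subst FVar Var (proj_stk i k) M.
Proof.
  revert k; induction M; intros; simpl; rewrite ?IHM, ?IHM1, ?IHM2, ?fsub_id; auto.
  - f_equal. f_equal; try fext; apply functional_extensionality; intros a;
    unfold upl_m, proj_stk; destruct (a =? k); simpl; destruct i; auto.
  - unfold proj_stk. destruct (n =? k); destruct i; reflexivity.
  - f_equal. f_equal; try fext; apply functional_extensionality; intros [|a]; [reflexivity|].
    unfold upm_m, proj_stk. unfold scons. cbv beta iota. change (S a =? S k) with (a =? k).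
    destruct (a =? k); simpl; destruct i; auto.
  - rewrite fup_id. f_equal. f_equal; try fext; apply functional_extensionality; intros a;
    unfold upf_m, proj_stk; destruct (a =? k); simpl; destruct i; auto.
Qed.

Lemma ssub_inst_subst k t M : ssub_inst k t M = subst FVar Var (inst_stk k t) M.
Proof.
  revert k t; induction M; intros; simpl; rewrite ?IHM, ?IHM1, ?IHM2, ?fsub_id; auto.
  - f_equal. f_equal; try fext; apply functional_extensionality; intros a;
    unfold upl_m, inst_stk; destruct (a =? k); unfold ren_stk; simpl; rewrite ?fren_id; auto.
  - unfold inst_stk. destruct (n =? k); reflexivity.
  - f_equal. f_equal; try fext; apply functional_extensionality; intros [|a]; [reflexivity|].
    unfold upm_m, inst_stk. unfold scons. cbv beta iota. change (S a =? S k) with (a =? k).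
    destruct (a =? k); unfold ren_stk; simpl; rewrite ?fren_id; auto.
  - rewrite fup_id. f_equal. f_equal; try fext; apply functional_extensionality; intros a;
    unfold upf_m, inst_stk; destruct (a =? k); unfold ren_stk; simpl; rewrite ?fren_id; auto.
Qed.


Section Typing.
Variables fa ra : nat -> nat.

Fixpoint frames_typ (G D : list formula) (A : formula) (F : list frame) (B : formula) : Prop :=
  match F with
  | [] => A = B
  | FrA N :: F => exists A1 A2, A = Imp A1 A2 /\ typ fa ra G D N A1 /\ frames_typ G D A2 F B
  | FrP1 :: F => exists A1 A2, A = And A1 A2 /\ frames_typ G D A1 F B
  | FrP2 :: F => exists A1 A2, A = And A1 A2 /\ frames_typ G D A2 F B
  | FrI t :: F => exists A1, A = All A1 /\ wf_fterm fa t /\ frames_typ G D (inst0 t A1) F B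
  end.

Definition stk_typ G D A (E : stk) : Prop :=
  exists B, frames_typ G D A (fst E) B /\
    match snd E with None => B = Bot | Some b => nth_error D b = Some B end.

Lemma plugF_typ G D F : forall L A B, typ fa ra G D L A -> frames_typ G D A F B ->
  typ fa ra G D (plugF F L) B.
Proof.
  induction F as [|f F IH]; intros L A B HL HF; simpl in *.
  - subst; auto.
  - destruct f; simpl in HF.
    + destruct HF as (A1 & A2 & -> & HN & HF). eapply IH; [|eauto]. econstructor; eauto.
    + destruct HF as (A1 & A2 & -> & HF). eapply IH; [|eauto]. econstructor; eauto.
    + destruct HF as (A1 & A2 & -> & HF). eapply IH; [|eauto]. econstructor; eauto.
    + destruct HF as (A1 & -> & Ht & HF). eapply IH; [|eauto]. econstructor; eauto.
Qed.

Lemma plug_typ G D E L A : typ fa ra G D L A -> stk_typ G D A E -> typ fa ra G D (plug E L) Bot.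
Proof.
  intros HL (B & HF & He). destruct E as [F [b|]]; unfold plug; simpl in *.
  - econstructor; eauto. eapply plugF_typ; eauto.
  - subst. eapply plugF_typ; eauto.
Qed.

Definition ctx_ren (xf xi : nat -> nat) (G G' : list formula) :=
  forall n B, nth_error G n = Some B -> nth_error G' (xi n) = Some (Fren xf B).

Lemma ctx_ren_up xf xi G G' A : ctx_ren xf xi G G' ->
  ctx_ren xf (upren xi) (A :: G) (Fren xf A :: G').
Proof. intros H [|n] B Hn; simpl in *; [congruence|auto]. Qed.

Lemma ctx_ren_shift xf xi G G' : ctx_ren xf xi G G' ->
  ctx_ren (upren xf) xi (map shiftF G) (map shiftF G').
Proof.
  intros H n B Hn. rewrite nth_error_map in *.
  destruct (nth_error G n) eqn:E; simpl in Hn; inversion Hn; subst.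
  rewrite (H _ _ E). simpl. f_equal. unfold shiftF. rewrite !Fren_Fren. reflexivity.
Qed.

Lemma typ_ren G D M A : typ fa ra G D M A -> forall xf xl xm G' D',
  ctx_ren xf xl G G' -> ctx_ren xf xm D D' ->
  typ fa ra G' D' (ren xf xl xm M) (Fren xf A).
Proof.
  induction 1; intros xf xl xm G' D' HG HD; simpl.
  - constructor; auto.
  - constructor. apply wf_Fren; auto. apply IHtyp; auto. apply ctx_ren_up; auto.
  - econstructor; eauto.
  - constructor.
  - constructor; auto.
  - econstructor. apply (IHtyp xf xl xm G' D' HG HD).
  - econstructor. apply (IHtyp xf xl xm G' D' HG HD).
  - econstructor; eauto.
  - constructor. apply wf_Fren; auto. apply (IHtyp xf xl (upren xm) G' (Fren xf A :: D')); auto.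
    apply ctx_ren_up; auto.
  - constructor. apply IHtyp; apply ctx_ren_shift; auto.
  - rewrite Fren_inst0. econstructor. apply wf_fren; auto.
    apply (IHtyp xf xl xm G' D' HG HD).
Qed.

Lemma frames_typ_ren G D F : forall A B xf xl xm G' D',
  ctx_ren xf xl G G' -> ctx_ren xf xm D D' -> frames_typ G D A F B ->
  frames_typ G' D' (Fren xf A) (map (ren_frame xf xl xm) F) (Fren xf B).
Proof.
  induction F as [|f F IH]; intros A B xf xl xm G' D' HG HD HF; simpl in *.
  - subst; auto.
  - destruct f; simpl in *.
    + destruct HF as (A1 & A2 & -> & HN & HF). exists (Fren xf A1), (Fren xf A2).
      split; auto. split. eapply typ_ren; eauto. eapply IH; eauto.
    + destruct HF as (A1 & A2 & -> & HF). exists (Fren xf A1), (Fren xf A2). split; auto.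
    + destruct HF as (A1 & A2 & -> & HF). exists (Fren xf A1), (Fren xf A2). split; auto.
    + destruct HF as (A1 & -> & Ht & HF). exists (Fren (upren xf) A1). split; auto. split.
      apply wf_fren; auto. rewrite <- Fren_inst0. eapply IH; eauto.
Qed.

Lemma stk_typ_ren G D A E xf xl xm G' D' :
  ctx_ren xf xl G G' -> ctx_ren xf xm D D' -> stk_typ G D A E ->
  stk_typ G' D' (Fren xf A) (ren_stk xf xl xm E).
Proof.
  intros HG HD (B & HF & He). exists (Fren xf B). split.
  - eapply frames_typ_ren; eauto.
  - destruct E as [F [b|]]; simpl in *; subst; auto.
Qed.

Lemma shift_Fsub sf B : Fsub (fup sf) (shiftF B) = shiftF (Fsub sf B).
Proof.
  unfold shiftF. rewrite !Fren_Fsub, !Fsub_Fsub. f_equal.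
  apply functional_extensionality; intros n; unfold fcomp; simpl. rewrite fren_fsub; auto.
Qed.

Definition sub_ok G D G' D' sf sl sm :=
  (forall n, wf_fterm fa (sf n)) /\
  (forall n B, nth_error G n = Some B -> typ fa ra G' D' (sl n) (Fsub sf B)) /\
  (forall a B, nth_error D a = Some B -> stk_typ G' D' (Fsub sf B) (sm a)).

Lemma ctx_ren_S_l G A : ctx_ren idn S G (A :: G).
Proof. intros n B H; simpl; rewrite Fren_id; auto. Qed.
Lemma ctx_ren_id G : ctx_ren idn idn G G.
Proof. intros n B H; unfold idn; rewrite Fren_id; auto. Qed.
Lemma ctx_ren_shiftF G : ctx_ren S idn G (map shiftF G).
Proof. intros n B H; unfold idn; rewrite nth_error_map, H; auto. Qed.

Lemma typ_subst G D M A : typ fa ra G D M A -> forall G' D' sf sl sm,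
  sub_ok G D G' D' sf sl sm -> typ fa ra G' D' (subst sf sl sm M) (Fsub sf A).
Proof.
  induction 1; intros G' D' sf sl sm (Hf & Hl & Hm); simpl.
  - auto.
  - constructor. apply wf_Fsub; auto. apply IHtyp. split; [|split]; auto.
    + intros [|n] B' Hn; simpl in *. inversion Hn; subst; constructor; auto.
      rewrite <- (Fren_id (Fsub sf B')). eapply typ_ren; eauto.
      apply ctx_ren_S_l. apply ctx_ren_id.
    + intros a B' Ha. unfold upl_m. rewrite <- (Fren_id (Fsub sf B')).
      eapply stk_typ_ren; eauto. apply ctx_ren_S_l. apply ctx_ren_id.
  - econstructor. apply (IHtyp1 G' D' sf sl sm); split; auto. apply IHtyp2; split; auto.
  - constructor.
  - constructor; [apply IHtyp1|apply IHtyp2]; split; auto.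
  - econstructor. apply (IHtyp G' D' sf sl sm); split; auto.
  - econstructor. apply (IHtyp G' D' sf sl sm); split; auto.
  - eapply plug_typ. apply IHtyp; split; auto. apply Hm; auto.
  - constructor. apply wf_Fsub; auto. apply IHtyp. split; [|split]; auto.
    + intros n B' Hn. unfold upm_l. rewrite <- (Fren_id (Fsub sf B')).
      eapply typ_ren; eauto. apply ctx_ren_id. apply ctx_ren_S_l.
    + intros [|a] B' Ha; simpl in *.
      * inversion Ha; subst. exists (Fsub sf B'); simpl; auto.
      * unfold upm_m. rewrite <- (Fren_id (Fsub sf B')).
        eapply stk_typ_ren; eauto. apply ctx_ren_id. apply ctx_ren_S_l.
  - constructor. apply IHtyp. split; [|split].
    + intros [|n]; simpl; auto. apply wf_fren; auto.
    + intros n B' Hn. rewrite nth_error_map in Hn.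
      destruct (nth_error G n) eqn:E; simpl in Hn; inversion Hn; subst.
      rewrite shift_Fsub. unfold upf_l. eapply typ_ren; eauto; apply ctx_ren_shiftF.
    + intros n B' Hn. rewrite nth_error_map in Hn.
      destruct (nth_error D n) eqn:E; simpl in Hn; inversion Hn; subst.
      rewrite shift_Fsub. unfold upf_m. eapply stk_typ_ren; eauto; apply ctx_ren_shiftF.
  - rewrite Fsub_inst0. econstructor. apply wf_fsub; auto.
    apply (IHtyp G' D' sf sl sm); split; auto.
Qed.

Lemma typ_wf G D M A : typ fa ra G D M A ->
  (forall n B, nth_error G n = Some B -> wf_form fa ra B) ->
  (forall n B, nth_error D n = Some B -> wf_form fa ra B) -> wf_form fa ra A.
Proof.
  induction 1; intros HG HD; simpl in *; eauto.
  - split; auto. apply IHtyp; auto. intros [|n] B' Hn; simpl in *; eauto. congruence.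
  - destruct (IHtyp1 HG HD); auto.
  - destruct (IHtyp HG HD); auto.
  - destruct (IHtyp HG HD); auto.
  - apply IHtyp; intros n B Hn; rewrite nth_error_map in Hn;
    destruct (nth_error _ n) eqn:E; simpl in Hn; inversion Hn; subst; apply wf_Fren; eauto.
  - unfold inst0. apply wf_Fsub; auto. intros [|n]; simpl; auto.
Qed.

End Typing.


Section Eqs.
Variables fa ra : nat -> nat.

Lemma plugF_eqt G D F : forall X Y A B, eqt fa ra G D X Y A -> frames_typ fa ra G D A F B ->
  eqt fa ra G D (plugF F X) (plugF F Y) B.
Proof.
  induction F as [|f F IH]; intros X Y A B HXY HF; simpl in *.
  - subst; auto.
  - destruct f; simpl in HF.
    + destruct HF as (A1 & A2 & -> & HN & HF). eapply IH; [|eauto].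
      eapply eq_app; eauto. apply eq_refl; auto.
    + destruct HF as (A1 & A2 & -> & HF). eapply IH; [|eauto]. eapply eq_pi1; eauto.
    + destruct HF as (A1 & A2 & -> & HF). eapply IH; [|eauto]. eapply eq_pi2; eauto.
    + destruct HF as (A1 & -> & Ht & HF). eapply IH; [|eauto]. eapply eq_inst; eauto.
Qed.

Lemma plug_eqt G D E X Y A : eqt fa ra G D X Y A -> stk_typ fa ra G D A E ->
  eqt fa ra G D (plug E X) (plug E Y) Bot.
Proof.
  intros HXY (B & HF & He). destruct E as [F [b|]]; unfold plug; simpl in *.
  - eapply eq_named; eauto. eapply plugF_eqt; eauto.
  - subst. eapply plugF_eqt; eauto.
Qed.

Definition erase_stk a : nat -> stk := fun b => if Nat.eqb b a then ([], None) else ([], Some b).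

Lemma erase_eqt G D M A : typ fa ra G D M A -> forall k, nth_error D k = Some Bot ->
  eqt fa ra G D M (subst FVar Var (erase_stk k) M) A.
Proof.
  induction 1; intros k Ha; simpl.
  - apply eq_refl; constructor; auto.
  - apply eq_lam; auto.
    replace (upl_l Var) with Var by (apply functional_extensionality; intros [|n]; reflexivity).
    replace (upl_m (erase_stk k)) with (erase_stk k); auto.
    apply functional_extensionality; intros b; unfold upl_m, erase_stk.
    destruct (b =? k); reflexivity.
  - eapply eq_app; eauto.
  - apply eq_refl; constructor.
  - apply eq_pair; eauto.
  - eapply eq_pi1; eauto.
  - eapply eq_pi2; eauto.
  - unfold erase_stk at 1. destruct (Nat.eqb_spec a k).
    + subst. rewrite H in Ha. inversion Ha; subst. unfold plug; simpl.
      eapply eq_trans. apply ax_bot; eauto. apply IHtyp; auto.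
    + unfold plug; simpl. eapply eq_named; eauto.
  - apply eq_mu; auto.
    replace (upm_l Var) with Var by (apply functional_extensionality; intros [|n]; reflexivity).
    replace (upm_m (erase_stk k)) with (erase_stk (S k)).
    + apply IHtyp; auto.
    + apply functional_extensionality; intros [|b]; unfold upm_m, erase_stk; [reflexivity|].
      unfold scons. cbv beta iota. change (S b =? S k) with (b =? k).
      destruct (b =? k); reflexivity.
  - apply eq_flam. rewrite fup_id.
    replace (upf_l Var) with Var by (apply functional_extensionality; intros [|n]; reflexivity).
    replace (upf_m (erase_stk k)) with (erase_stk k).
    + apply IHtyp. rewrite nth_error_map, Ha; auto.
    + apply functional_extensionality; intros b; unfold upf_m, erase_stk.
      destruct (b =? k); reflexivity.
  - rewrite fsub_id. apply eq_inst; auto.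
Qed.

Definition mu_stk (E : stk) : nat -> stk := scons E idstk.

Lemma subst_Var_eta : (fun n => Var n) = Var.
Proof. reflexivity. Qed.

Lemma mu_bot G D K : typ fa ra G (Bot :: D) K Bot ->
  eqt fa ra G D (Mu K) (subst FVar Var (mu_stk ([], None)) K) Bot.
Proof.
  intros HK.
  set (X := subst FVar Var (mu_stk ([], None)) K).
  assert (HX : typ fa ra G D X Bot).
  { pose proof (typ_subst fa ra _ _ _ _ HK G D FVar Var (mu_stk ([], None))) as H.
    simpl in H. apply H. split; [intros; simpl; auto|split].
    - intros n B Hn; rewrite Fsub_id; constructor; auto.
    - intros [|a] B Ha; simpl in *; rewrite Fsub_id.
      + inversion Ha; subst. exists Bot; simpl; auto.
      + exists B; simpl; auto. }
  assert (HS : tren_mu S X = subst FVar Var (erase_stk 0) K).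
  { unfold X. rewrite tren_mu_ren, ren_subst. f_equal.
    all: apply functional_extensionality; intros [|a]; reflexivity. }
  assert (HSX : typ fa ra G (Bot :: D) (tren_mu S X) Bot).
  { rewrite tren_mu_ren. rewrite <- (Fren_id Bot) at 2.
    eapply typ_ren; eauto. apply ctx_ren_id. intros n B Hn; simpl; rewrite Fren_id; auto. }
  eapply eq_trans; [| apply ax_eta_mu; exact HX].
  apply eq_mu; [simpl; auto|].
  eapply eq_trans. apply (erase_eqt _ _ _ _ HK 0); auto.
  rewrite <- HS. apply eq_sym. apply ax_bot; auto.
Qed.

End Eqs.


Section MuPlug.
Variables fa ra : nat -> nat.

Definition shstk (f : frame) : nat -> stk :=
  scons ([ren_frame idn idn S f], Some 0) (fun a => ([], Some (S a))).

Lemma shstk_ok G D A A' f : frames_typ fa ra G D A [f] A' ->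
  sub_ok fa ra G (A :: D) G (A' :: D) FVar Var (shstk f).
Proof.
  intros Hf. split; [intros; simpl; auto|split].
  - intros n B Hn; rewrite Fsub_id; constructor; auto.
  - intros [|a] B Ha; simpl in Ha; rewrite Fsub_id.
    + inversion Ha; subst. exists A'. split; [|reflexivity].
      change (frames_typ fa ra G (A' :: D) B (map (ren_frame idn idn S) [f]) A').
      rewrite <- (Fren_id B), <- (Fren_id A').
      eapply frames_typ_ren; eauto. apply ctx_ren_id. intros n C Hn; simpl; rewrite Fren_id; auto.
    + exists B; simpl; auto.
Qed.

Lemma wf_frame G D A f A' : frames_typ fa ra G D A [f] A' -> wf_form fa ra A -> wf_form fa ra A'.
Proof.
  destruct f; simpl; intros H Hw.
  - destruct H as (A1 & A2 & -> & _ & ->). apply Hw.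
  - destruct H as (A1 & A2 & -> & ->). apply Hw.
  - destruct H as (A1 & A2 & -> & ->). apply Hw.
  - destruct H as (A1 & -> & Ht & <-). unfold inst0. apply wf_Fsub; auto. intros [|n]; simpl; auto.
Qed.

Lemma mu_step G D A A' f K : frames_typ fa ra G D A [f] A' -> wf_form fa ra A ->
  typ fa ra G (A :: D) K Bot ->
  eqt fa ra G D (apf f (Mu K)) (Mu (subst FVar Var (shstk f) K)) A'.
Proof.
  intros Hf Hw HK.
  assert (HM : typ fa ra G D (Mu K) A) by (constructor; auto).
  destruct f; simpl in Hf.
  - destruct Hf as (A1 & A2 & -> & HN & ->).
    replace (subst FVar Var (shstk (FrA N)) K) with (ssub_app 0 (tren_mu S N) K).
    + apply ax_mu_app. econstructor; eauto.
    + rewrite ssub_app_subst, tren_mu_ren. f_equal. apply functional_extensionality; intros [|a]; reflexivity.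
  - destruct Hf as (A1 & A2 & -> & ->).
    replace (subst FVar Var (shstk FrP1) K) with (ssub_proj true 0 K).
    + apply ax_mu_pi1. econstructor; eauto.
    + rewrite ssub_proj_subst. f_equal. apply functional_extensionality; intros [|a]; reflexivity.
  - destruct Hf as (A1 & A2 & -> & ->).
    replace (subst FVar Var (shstk FrP2) K) with (ssub_proj false 0 K).
    + apply ax_mu_pi2. econstructor; eauto.
    + rewrite ssub_proj_subst. f_equal. apply functional_extensionality; intros [|a]; reflexivity.
  - destruct Hf as (A1 & -> & Ht & <-).
    replace (subst FVar Var (shstk (FrI t)) K) with (ssub_inst 0 t K).
    + apply ax_mu_inst. econstructor; eauto.
    + rewrite ssub_inst_subst. f_equal. apply functional_extensionality; intros [|a]; simpl; auto.
      unfold shstk, inst_stk; simpl. rewrite fren_id. auto.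
Qed.

Lemma frames_typ_cons G D A f F B : frames_typ fa ra G D A (f :: F) B ->
  exists A', frames_typ fa ra G D A [f] A' /\ frames_typ fa ra G D A' F B.
Proof.
  destruct f; simpl; intros H.
  - destruct H as (A1 & A2 & -> & HN & HF). exists A2. split; auto. exists A1, A2; auto.
  - destruct H as (A1 & A2 & -> & HF). exists A1. split; auto. exists A1, A2; auto.
  - destruct H as (A1 & A2 & -> & HF). exists A2. split; auto. exists A1, A2; auto.
  - destruct H as (A1 & -> & Ht & HF). exists (inst0 t A1). split; auto. exists A1; auto.
Qed.

Lemma mu_plug G D F : forall e A K, stk_typ fa ra G D A (F, e) -> wf_form fa ra A ->
  typ fa ra G (A :: D) K Bot ->
  eqt fa ra G D (plug (F, e) (Mu K)) (subst FVar Var (mu_stk (F, e)) K) Bot.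
Proof.
  induction F as [|f F IH]; intros e A K (B & HF & He) Hw HK; simpl in HF.
  - subst B. destruct e as [b|]; simpl in He.
    + unfold plug; simpl.
      replace (subst FVar Var (mu_stk ([], Some b)) K) with (tren_mu (scons b (fun n => n)) K).
      * apply ax_rho. econstructor; eauto. constructor; auto.
      * rewrite tren_mu_ren, ren_is_subst. f_equal; apply functional_extensionality; intros [|a]; reflexivity.
    + subst. unfold plug; simpl. apply mu_bot; auto.
  - destruct (frames_typ_cons _ _ _ _ _ _ HF) as (A' & Hf & HF').
    change (plug (f :: F, e) (Mu K)) with (plug (F, e) (apf f (Mu K))).
    pose proof (shstk_ok _ _ _ _ _ Hf) as Hok.
    assert (HK' : typ fa ra G (A' :: D) (subst FVar Var (shstk f) K) Bot).
    { pose proof (typ_subst fa ra _ _ _ _ HK _ _ _ _ _ Hok) as H. exact H. }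
    assert (Hc : subst FVar Var (mu_stk (F, e)) (subst FVar Var (shstk f) K) =
                 subst FVar Var (mu_stk (f :: F, e)) K).
    { rewrite subst_subst.
      f_equal; apply functional_extensionality; intros [|a]; try reflexivity.
      unfold shstk, stk_subst, mu_stk; simpl. f_equal. f_equal.
      destruct f; simpl; auto.
      - f_equal. rewrite subst_ren. rewrite <- (subst_id N) at 2. f_equal.
      - rewrite fsub_id, fren_id. auto. }
    eapply eq_trans.
    + eapply plug_eqt. apply (mu_step _ _ _ _ _ _ Hf Hw HK). exists B; split; auto.
    + rewrite <- Hc. apply (IH e A'); auto. exists B; split; auto.
      eapply wf_frame; eauto.
Qed.

End MuPlug.


Section Good.
Variables fa ra : nat -> nat.

Definition goodF (gsn : list formula -> list formula -> formula -> stk -> Prop)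
  (G D : list formula) (A : formula) (M : term) : Prop :=
  typ fa ra G D M A /\
  forall xf xl xm G' D', ctx_ren xf xl G G' -> ctx_ren xf xm D D' ->
  forall E, gsn G' D' (Fren xf A) E ->
  exists N, cnfQ fa G' D' N Bot /\ eqt fa ra G' D' (plug E (ren xf xl xm M)) N Bot.

Fixpoint gs (n : nat) (G D : list formula) (A : formula) (E : stk) : Prop :=
  match n with
  | 0 => False
  | S n =>
    match A with
    | Bot => E = ([], None)
    | Atom X ts => exists b, E = ([], Some b) /\ nth_error D b = Some (Atom X ts)
    | Top => False
    | Imp A1 A2 => match fst E with
                   | FrA N :: F => goodF (gs n) G D A1 N /\ gs n G D A2 (F, snd E)
                   | _ => False end
    | And A1 A2 => match fst E with
                   | FrP1 :: F => gs n G D A1 (F, snd E)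
                   | FrP2 :: F => gs n G D A2 (F, snd E)
                   | _ => False end
    | All A1 => match fst E with
                | FrI t :: F => wf_fterm fa t /\ gs n G D (inst0 t A1) (F, snd E)
                | _ => False end
    end
  end.

Lemma goodF_ext (g1 g2 : list formula -> list formula -> formula -> stk -> Prop) G D A M :
  (forall G' D' xf E, g1 G' D' (Fren xf A) E <-> g2 G' D' (Fren xf A) E) ->
  (goodF g1 G D A M <-> goodF g2 G D A M).
Proof.
  intros H. unfold goodF. split; intros [Ht Hg]; split; auto; intros; eapply Hg; eauto; apply H; auto.
Qed.

Lemma gs_fuel n : forall m A G D E, fsize A <= n -> fsize A <= m -> (gs n G D A E <-> gs m G D A E).
Proof.
  induction n as [|n IH]; intros m A G D E H1 H2.
  - pose proof (fsize_pos A); lia.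
  - destruct m as [|m]. pose proof (fsize_pos A); lia.
    destruct A; simpl in *; try tauto.
    + destruct E as [[|[] F] e]; simpl; try tauto.
      rewrite (goodF_ext (gs n) (gs m)). rewrite (IH m). tauto. lia. lia.
      intros; apply IH; rewrite fsize_Fren; lia.
    + destruct E as [[|[] F] e]; simpl; try tauto; apply IH; lia.
    + destruct E as [[|[] F] e]; simpl; try tauto. rewrite (IH m). tauto.
      rewrite fsize_inst0; lia. rewrite fsize_inst0; lia.
Qed.

Definition GS G D A E := gs (fsize A) G D A E.
Definition GOOD G D A M := goodF (gs (fsize A)) G D A M.

Lemma GOOD_unfold G D A M : GOOD G D A M <->
  typ fa ra G D M A /\
  forall xf xl xm G' D', ctx_ren xf xl G G' -> ctx_ren xf xm D D' ->
  forall E, GS G' D' (Fren xf A) E ->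
  exists N, cnfQ fa G' D' N Bot /\ eqt fa ra G' D' (plug E (ren xf xl xm M)) N Bot.
Proof.
  unfold GOOD, GS.
  transitivity (goodF (fun G' D' B E => gs (fsize B) G' D' B E) G D A M).
  - apply goodF_ext. intros. rewrite fsize_Fren. tauto.
  - unfold goodF. tauto.
Qed.

Lemma GS_Bot G D E : GS G D Bot E <-> E = ([], None).
Proof. reflexivity. Qed.
Lemma GS_Atom G D X ts E : GS G D (Atom X ts) E <->
  exists b, E = ([], Some b) /\ nth_error D b = Some (Atom X ts).
Proof. reflexivity. Qed.
Lemma GS_Top G D E : GS G D Top E <-> False.
Proof. reflexivity. Qed.

Lemma GS_Imp G D A B E : GS G D (Imp A B) E <->
  exists N F, fst E = FrA N :: F /\ GOOD G D A N /\ GS G D B (F, snd E).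
Proof.
  unfold GS, GOOD. simpl. destruct E as [[|[] F] e]; simpl; split; intros H;
  try (destruct H as (N' & F' & H1 & _); discriminate); try contradiction.
  - destruct H as [H1 H2]. exists N, F. split; auto. split.
    + eapply goodF_ext; [|eauto]. intros; apply gs_fuel; rewrite ?fsize_Fren; lia.
    + eapply gs_fuel; [| |eauto]; lia.
  - destruct H as (N' & F' & H1 & H2 & H3). inversion H1; subst. split.
    + eapply goodF_ext; [|eauto]. intros; apply gs_fuel; rewrite ?fsize_Fren; lia.
    + eapply gs_fuel; [| |eauto]; lia.
Qed.

Lemma GS_And G D A B E : GS G D (And A B) E <->
  exists F, (fst E = FrP1 :: F /\ GS G D A (F, snd E)) \/ (fst E = FrP2 :: F /\ GS G D B (F, snd E)).
Proof.
  unfold GS. simpl. destruct E as [[|[] F] e]; simpl; split; intros H;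
  try (destruct H as (F' & [[H1 _]|[H1 _]]); discriminate); try contradiction.
  - exists F; left; split; auto. eapply gs_fuel; [| |eauto]; lia.
  - destruct H as (F' & [[H1 H2]|[H1 H2]]); inversion H1; subst. eapply gs_fuel; [| |eauto]; lia.
  - exists F; right; split; auto. eapply gs_fuel; [| |eauto]; lia.
  - destruct H as (F' & [[H1 H2]|[H1 H2]]); inversion H1; subst. eapply gs_fuel; [| |eauto]; lia.
Qed.

Lemma GS_All G D A E : GS G D (All A) E <->
  exists t F, fst E = FrI t :: F /\ wf_fterm fa t /\ GS G D (inst0 t A) (F, snd E).
Proof.
  unfold GS. simpl. destruct E as [[|[] F] e]; simpl; split; intros H;
  try (destruct H as (t' & F' & H1 & _); discriminate); try contradiction.
  - destruct H as [H1 H2]. exists t, F. split; auto. split; auto.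
    eapply gs_fuel; [| |eauto]; rewrite fsize_inst0; lia.
  - destruct H as (t' & F' & H1 & H2 & H3). inversion H1; subst. split; auto.
    eapply gs_fuel; [| |eauto]; rewrite fsize_inst0; lia.
Qed.

Lemma ctx_ren_comp xf xi yf yi G G' G'' : ctx_ren xf xi G G' -> ctx_ren yf yi G' G'' ->
  ctx_ren (fun n => yf (xf n)) (fun n => yi (xi n)) G G''.
Proof. intros H1 H2 n B Hn. rewrite <- Fren_Fren. apply H2, H1; auto. Qed.

Lemma GOOD_typ G D A M : GOOD G D A M -> typ fa ra G D M A.
Proof. intros H; apply H. Qed.

Lemma GOOD_mono G D A M xf xl xm G' D' : GOOD G D A M ->
  ctx_ren xf xl G G' -> ctx_ren xf xm D D' -> GOOD G' D' (Fren xf A) (ren xf xl xm M).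
Proof.
  intros H HG HD. apply GOOD_unfold in H. destruct H as [Ht Hg]. apply GOOD_unfold. split.
  - eapply typ_ren; eauto.
  - intros yf yl ym G'' D'' HG' HD' E HE. rewrite ren_ren.
    apply Hg; try (eapply ctx_ren_comp; eauto). rewrite <- Fren_Fren. auto.
Qed.

Lemma plug_cons f F e X : plug (f :: F, e) X = plug (F, e) (apf f X).
Proof. destruct e; reflexivity. Qed.

Lemma GS_typ_n n : forall G D A E, fsize A <= n -> GS G D A E -> stk_typ fa ra G D A E.
Proof.
  induction n as [|n IH]; intros G D A E Hn H.
  - pose proof (fsize_pos A); lia.
  - destruct A; simpl in Hn.
    + apply GS_Top in H; contradiction.
    + apply GS_Bot in H; subst. exists Bot; simpl; auto.
    + apply GS_Atom in H. destruct H as (b & -> & Hb). exists (Atom n0 l); simpl; auto.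
    + apply GS_Imp in H. destruct H as (N & F & HE & HN & HF). destruct E as [F0 e]; simpl in *; subst.
      apply IH in HF; [|lia]. destruct HF as (B & HB & He). exists B; split; auto.
      simpl. exists A1, A2. split; auto. split; auto. apply GOOD_typ; auto.
    + apply GS_And in H. destruct E as [F0 e]; simpl in *.
      destruct H as (F & [[-> HF]|[-> HF]]);
      (apply IH in HF; [|lia]); destruct HF as (B & HB & He); exists B; split; auto;
      simpl; exists A1, A2; auto.
    + apply GS_All in H. destruct H as (t & F & HE & Ht & HF). destruct E as [F0 e]; simpl in *; subst.
      assert (fsize (inst0 t A) <= n) by (rewrite fsize_inst0; lia).
      destruct (IH _ _ _ _ H HF) as (B & HB & He). exists B; split; auto.
      simpl. exists A; auto.
Qed.

Lemma GS_typ G D A E : GS G D A E -> stk_typ fa ra G D A E.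
Proof. apply GS_typ_n with (n := fsize A); auto. Qed.

Lemma GS_mono_n n : forall G D A E xf xl xm G' D', fsize A <= n -> GS G D A E ->
  ctx_ren xf xl G G' -> ctx_ren xf xm D D' -> GS G' D' (Fren xf A) (ren_stk xf xl xm E).
Proof.
  induction n as [|n IH]; intros G D A E xf xl xm G' D' Hn H HG HD.
  - pose proof (fsize_pos A); lia.
  - destruct A; simpl in Hn.
    + apply GS_Top in H; contradiction.
    + apply GS_Bot in H; subst. reflexivity.
    + apply GS_Atom in H. destruct H as (b & -> & Hb). apply GS_Atom. exists (xm b). split; auto.
      apply HD in Hb. auto.
    + apply GS_Imp in H. destruct H as (N & F & HE & HN & HF). destruct E as [F0 e]; simpl in *; subst.
      apply GS_Imp. exists (ren xf xl xm N), (map (ren_frame xf xl xm) F). split; auto. split.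
      eapply GOOD_mono; eauto.
      eapply (IH G D _ (F, e)); eauto. lia.
    + apply GS_And in H. apply GS_And. destruct E as [F0 e]; simpl in *.
      destruct H as (F & [[-> HF]|[-> HF]]); exists (map (ren_frame xf xl xm) F); [left|right];
      split; auto; eapply (IH G D _ (F, e)); eauto; lia.
    + apply GS_All in H. destruct H as (t & F & HE & Ht & HF). destruct E as [F0 e]; simpl in *; subst.
      apply GS_All. exists (fren xf t), (map (ren_frame xf xl xm) F). split; auto. split.
      apply wf_fren; auto. rewrite <- Fren_inst0.
      eapply (IH G D _ (F, e)); eauto. rewrite fsize_inst0; lia.
Qed.

Lemma GS_mono G D A E xf xl xm G' D' : GS G D A E ->
  ctx_ren xf xl G G' -> ctx_ren xf xm D D' -> GS G' D' (Fren xf A) (ren_stk xf xl xm E).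
Proof. intros; eapply GS_mono_n; eauto. Qed.

Lemma good_app G D A B M N : GOOD G D (Imp A B) M -> GOOD G D A N -> GOOD G D B (App M N).
Proof.
  intros HM HN. pose proof HM as HM'. apply GOOD_unfold in HM. destruct HM as [HtM HgM].
  apply GOOD_unfold. split. econstructor; eauto. apply GOOD_typ; auto.
  intros xf xl xm G' D' HG HD E HE. destruct E as [F e]. simpl ren.
  change (exists N0, cnfQ fa G' D' N0 Bot /\ eqt fa ra G' D' (plug (FrA (ren xf xl xm N) :: F, e) (ren xf xl xm M)) N0 Bot).
  apply HgM; auto. apply GS_Imp. eexists _, _. split; [reflexivity|]. split; auto.
  eapply GOOD_mono; eauto.
Qed.

Lemma good_pi1 G D A B M : GOOD G D (And A B) M -> GOOD G D A (Pi1 M).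
Proof.
  intros HM. apply GOOD_unfold in HM. destruct HM as [HtM HgM].
  apply GOOD_unfold. split. econstructor; eauto.
  intros xf xl xm G' D' HG HD E HE. destruct E as [F e]. simpl ren.
  change (exists N0, cnfQ fa G' D' N0 Bot /\ eqt fa ra G' D' (plug (FrP1 :: F, e) (ren xf xl xm M)) N0 Bot). apply HgM; auto. apply GS_And. exists F; left; auto.
Qed.

Lemma good_pi2 G D A B M : GOOD G D (And A B) M -> GOOD G D B (Pi2 M).
Proof.
  intros HM. apply GOOD_unfold in HM. destruct HM as [HtM HgM].
  apply GOOD_unfold. split. econstructor; eauto.
  intros xf xl xm G' D' HG HD E HE. destruct E as [F e]. simpl ren.
  change (exists N0, cnfQ fa G' D' N0 Bot /\ eqt fa ra G' D' (plug (FrP2 :: F, e) (ren xf xl xm M)) N0 Bot). apply HgM; auto. apply GS_And. exists F; right; auto.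
Qed.

Lemma good_inst G D A M t : GOOD G D (All A) M -> wf_fterm fa t -> GOOD G D (inst0 t A) (Inst M t).
Proof.
  intros HM Ht. apply GOOD_unfold in HM. destruct HM as [HtM HgM].
  apply GOOD_unfold. split. econstructor; eauto.
  intros xf xl xm G' D' HG HD E HE. destruct E as [F e]. simpl ren.
  change (exists N0, cnfQ fa G' D' N0 Bot /\ eqt fa ra G' D' (plug (FrI (fren xf t) :: F, e) (ren xf xl xm M)) N0 Bot). apply HgM; auto. apply GS_All.
  eexists _, _. split; [reflexivity|]. split. apply wf_fren; auto.
  rewrite <- Fren_inst0. auto.
Qed.

End Good.


Lemma stk_ren_is_subst xf xl xm E :
  stk_subst (fun n => FVar (xf n)) (fun n => Var (xl n)) (fun a => ([], Some (xm a))) E =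
  ren_stk xf xl xm E.
Proof.
  destruct E as [F [b|]]; unfold stk_subst, ren_stk; simpl; rewrite ?app_nil_r; f_equal;
  apply map_ext; intros []; simpl; auto; rewrite ?ren_is_subst, ?fren_fsub; auto.
Qed.

Lemma Fsub_ren_comp sf xf B : Fsub (fcomp sf (fun n => FVar (xf n))) B = Fren xf (Fsub sf B).
Proof. rewrite Fren_Fsub, Fsub_Fsub. auto. Qed.

Section Fund.
Variables fa ra : nat -> nat.

Definition good_sub G D G' D' sf sl sm :=
  (forall n, wf_fterm fa (sf n)) /\
  (forall n B, nth_error G n = Some B -> GOOD fa ra G' D' (Fsub sf B) (sl n)) /\
  (forall a B, nth_error D a = Some B -> GS fa ra G' D' (Fsub sf B) (sm a)).

Lemma good_sub_ok G D G' D' sf sl sm : good_sub G D G' D' sf sl sm -> sub_ok fa ra G D G' D' sf sl sm.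
Proof.
  intros (H1 & H2 & H3). split; [|split]; auto.
  - intros; apply GOOD_typ with (fa := fa); eauto.
  - intros; eapply GS_typ; eauto.
Qed.

Lemma good_sub_ren G D G' D' sf sl sm xf xl xm G'' D'' : good_sub G D G' D' sf sl sm ->
  ctx_ren xf xl G' G'' -> ctx_ren xf xm D' D'' ->
  good_sub G D G'' D'' (fcomp sf (fun n => FVar (xf n))) (fun n => ren xf xl xm (sl n))
    (fun a => ren_stk xf xl xm (sm a)).
Proof.
  intros (H1 & H2 & H3) HG HD. split; [|split].
  - intros n; unfold fcomp. rewrite <- fren_fsub. apply wf_fren; auto.
  - intros n B Hn. rewrite Fsub_ren_comp. eapply GOOD_mono; eauto.
  - intros a B Ha. rewrite Fsub_ren_comp. eapply GS_mono; eauto.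
Qed.

Lemma fund G D M A : typ fa ra G D M A -> forall G' D' sf sl sm,
  good_sub G D G' D' sf sl sm -> GOOD fa ra G' D' (Fsub sf A) (subst sf sl sm M).
Proof.
  induction 1; intros G' D' sf sl sm Hs.
  - destruct Hs as (_ & Hl & _). simpl. eauto.
  -
    rename A into A0. rename B into B0.
    pose proof (typ_subst fa ra _ _ _ _ (ty_lam fa ra _ _ _ _ _ H H0) _ _ _ _ _ (good_sub_ok _ _ _ _ _ _ _ Hs)) as Ht.
    apply GOOD_unfold. split; [exact Ht|].
    intros xf xl xm G'' D'' HG HD E HE. simpl in HE. apply GS_Imp in HE.
    destruct HE as (N & F & HE & HN & HF). destruct E as [E1 e]; simpl in HE, HF; subst E1.
    set (tf := fcomp sf (fun n => FVar (xf n))).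
    set (tl := scons N (fun n => ren xf xl xm (sl n))).
    set (tm := fun a => ren_stk xf xl xm (sm a)).
    assert (Hclaim : tsub_lam (scons N Var) (ren xf (upren xl) xm (subst sf (upl_l sl) (upl_m sm) M))
       = subst tf tl tm M).
    { rewrite tsub_lam_subst, ren_subst, subst_subst. f_equal.
      - unfold tf. apply functional_extensionality; intros n; unfold fcomp. apply fsub_id.
      - apply functional_extensionality; intros [|n]; [reflexivity|].
        unfold upl_l; simpl. rewrite ren_ren, subst_ren, ren_is_subst. reflexivity.
      - apply functional_extensionality; intros a. unfold upl_m, tm.
        rewrite ren_stk_ren_stk, stk_subst_ren, <- stk_ren_is_subst. reflexivity. }
    assert (HIH : GOOD fa ra G'' D'' (Fsub tf B0) (subst tf tl tm M)).
    { apply IHtyp. split; [|split].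
      - intros n; unfold tf, fcomp. rewrite <- fren_fsub. apply wf_fren. apply Hs.
      - intros [|n] B Hn; simpl in Hn.
        + inversion Hn; subst. unfold tf. rewrite Fsub_ren_comp. exact HN.
        + unfold tf. rewrite Fsub_ren_comp. eapply GOOD_mono; eauto. apply Hs; auto.
      - intros a B Ha. unfold tf. rewrite Fsub_ren_comp. eapply GS_mono; eauto. apply Hs; auto. }
    apply GOOD_unfold in HIH. destruct HIH as [_ HIH].
    destruct (HIH idn idn idn G'' D'' (ctx_ren_id _) (ctx_ren_id _) (F, e)) as (N0 & HN0 & HE0).
    { rewrite Fren_id. unfold tf. rewrite Fsub_ren_comp. exact HF. }
    rewrite ren_id in HE0. exists N0. split; auto.
    change (eqt fa ra G'' D'' (plug (F, e) (App (ren xf xl xm (subst sf sl sm (Lam M))) N)) N0 Bot).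
    eapply eq_trans; [|exact HE0].
    eapply plug_eqt. simpl ren. rewrite <- Hclaim. apply ax_beta.
    econstructor. 
    + change (Lam (ren xf (upren xl) xm (subst sf (upl_l sl) (upl_m sm) M))) with
        (ren xf xl xm (subst sf sl sm (Lam M))).
      eapply typ_ren in Ht; eauto. exact Ht.
    + apply GOOD_typ with (fa := fa); exact HN.
    + apply GS_typ. exact HF.
  -
    simpl. eapply good_app; [apply (IHtyp1 _ _ _ _ _ Hs)|apply IHtyp2; auto].
  -
    simpl. apply GOOD_unfold. split. constructor.
    intros xf xl xm G'' D'' HG HD E HE. simpl in HE. apply GS_Top in HE. contradiction.
  -
    pose proof (typ_subst fa ra _ _ _ _ (ty_pair fa ra _ _ _ _ _ _ H H0) _ _ _ _ _ (good_sub_ok _ _ _ _ _ _ _ Hs)) as Ht.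
    apply GOOD_unfold. split; [exact Ht|].
    intros xf xl xm G'' D'' HG HD E HE. simpl in HE. apply GS_And in HE.
    destruct E as [E1 e]. destruct HE as (F & [[HE HF]|[HE HF]]); simpl in HE, HF; subst E1.
    + pose proof (IHtyp1 _ _ _ _ _ Hs) as H1. apply GOOD_unfold in H1. destruct H1 as [_ H1].
      destruct (H1 _ _ _ _ _ HG HD _ HF) as (N0 & HN0 & HE0). exists N0; split; auto.
      change (eqt fa ra G'' D'' (plug (F, e) (Pi1 (ren xf xl xm (subst sf sl sm (Pair M N))))) N0 Bot).
      eapply eq_trans; [|exact HE0]. eapply plug_eqt; [|apply GS_typ; exact HF].
      apply ax_pi1. econstructor. eapply typ_ren in Ht; eauto. exact Ht.
    + pose proof (IHtyp2 _ _ _ _ _ Hs) as H1. apply GOOD_unfold in H1. destruct H1 as [_ H1].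
      destruct (H1 _ _ _ _ _ HG HD _ HF) as (N0 & HN0 & HE0). exists N0; split; auto.
      change (eqt fa ra G'' D'' (plug (F, e) (Pi2 (ren xf xl xm (subst sf sl sm (Pair M N))))) N0 Bot).
      eapply eq_trans; [|exact HE0]. eapply plug_eqt; [|apply GS_typ; exact HF].
      apply ax_pi2. econstructor. eapply typ_ren in Ht; eauto. exact Ht.
  - simpl. eapply good_pi1. apply (IHtyp _ _ _ _ _ Hs).
  - simpl. eapply good_pi2. apply (IHtyp _ _ _ _ _ Hs).
  -
    pose proof (typ_subst fa ra _ _ _ _ (ty_named fa ra _ _ _ _ _ H H0) _ _ _ _ _ (good_sub_ok _ _ _ _ _ _ _ Hs)) as Ht.
    apply GOOD_unfold. split; [exact Ht|].
    intros xf xl xm G'' D'' HG HD E HE. simpl in HE. apply GS_Bot in HE. subst E.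
    pose proof (IHtyp _ _ _ _ _ Hs) as H1. apply GOOD_unfold in H1. destruct H1 as [_ H1].
    destruct Hs as (_ & _ & Hm). pose proof (Hm _ _ H) as Hsm.
    destruct (H1 _ _ _ _ _ HG HD _ (GS_mono _ _ _ _ _ _ _ _ _ _ _ Hsm HG HD)) as (N0 & HN0 & HE0).
    exists N0; split; auto. simpl subst. unfold plug at 1; simpl. rewrite plug_ren. exact HE0.
  -
    pose proof (typ_subst fa ra _ _ _ _ (ty_mu fa ra _ _ _ _ H H0) _ _ _ _ _ (good_sub_ok _ _ _ _ _ _ _ Hs)) as Ht.
    apply GOOD_unfold. split; [exact Ht|].
    intros xf xl xm G'' D'' HG HD E HE.
    destruct E as [F e].
    set (tf := fcomp sf (fun n => FVar (xf n))).
    set (tl := fun n => ren xf xl xm (sl n)).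
    set (tm := scons (F, e) (fun a => ren_stk xf xl xm (sm a))).
    assert (Hclaim : subst FVar Var (mu_stk (F, e))
              (ren xf xl (upren xm) (subst sf (upm_l sl) (upm_m sm) M)) = subst tf tl tm M).
    { rewrite ren_subst, subst_subst. f_equal.
      - unfold tf. apply functional_extensionality; intros n; unfold fcomp. apply fsub_id.
      - apply functional_extensionality; intros n. unfold upm_l, tl.
        rewrite ren_ren, subst_ren, ren_is_subst. reflexivity.
      - apply functional_extensionality; intros [|a]; [reflexivity|]. unfold upm_m, tm; simpl.
        rewrite ren_stk_ren_stk, stk_subst_ren, <- stk_ren_is_subst. reflexivity. }
    assert (HIH : GOOD fa ra G'' D'' (Fsub tf Bot) (subst tf tl tm M)).
    { apply IHtyp. split; [|split].
      - intros n; unfold tf, fcomp. rewrite <- fren_fsub. apply wf_fren. apply Hs.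
      - intros n B Hn. unfold tf. rewrite Fsub_ren_comp. eapply GOOD_mono; eauto. apply Hs; auto.
      - intros [|a] B Ha; simpl in Ha.
        + inversion Ha; subst. unfold tf. rewrite Fsub_ren_comp. exact HE.
        + unfold tf. rewrite Fsub_ren_comp. eapply GS_mono; eauto. apply Hs; auto. }
    apply GOOD_unfold in HIH. destruct HIH as [_ HIH].
    destruct (HIH idn idn idn G'' D'' (ctx_ren_id _) (ctx_ren_id _) ([], None)) as (N0 & HN0 & HE0).
    { reflexivity. }
    rewrite ren_id in HE0. exists N0. split; auto.
    change (plug ([], None) (subst tf tl tm M)) with (subst tf tl tm M) in HE0.
    rewrite <- Hclaim in HE0.
    eapply eq_trans; [|exact HE0]. simpl subst. simpl ren. apply (mu_plug fa ra G'' D'' F e (Fren xf (Fsub sf A))).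
    + apply GS_typ. exact HE.
    + apply wf_Fren, wf_Fsub; auto. apply Hs.
    + inversion Ht; subst. change Bot with (Fren xf Bot). eapply typ_ren; eauto.
      apply ctx_ren_up; auto.
  -
    pose proof (typ_subst fa ra _ _ _ _ (ty_flam fa ra _ _ _ _ H) _ _ _ _ _ (good_sub_ok _ _ _ _ _ _ _ Hs)) as Ht.
    apply GOOD_unfold. split; [exact Ht|].
    intros xf xl xm G'' D'' HG HD E HE. simpl in HE. apply GS_All in HE.
    destruct HE as (t & F & HE & Hwt & HF). destruct E as [E1 e]; simpl in HE, HF; subst E1.
    set (tf := scons t (fcomp sf (fun n => FVar (xf n)))).
    set (tl := fun n => ren xf xl xm (sl n)).
    set (tm := fun a => ren_stk xf xl xm (sm a)).
    assert (Htf : fcomp (fcomp (fup sf) (fun n => FVar (upren xf n))) (scons t FVar) = tf).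
    { apply functional_extensionality; intros [|n]; [reflexivity|].
      unfold tf, fcomp; simpl. rewrite fren_fsub, !fsub_fsub. reflexivity. }
    assert (Hclaim : tsub_fo (scons t FVar) (ren (upren xf) xl xm (subst (fup sf) (upf_l sl) (upf_m sm) M))
       = subst tf tl tm M).
    { rewrite tsub_fo_subst, ren_subst, subst_subst. f_equal.
      - exact Htf.
      - apply functional_extensionality; intros n. unfold upf_l, tl.
        rewrite ren_ren, subst_ren, ren_is_subst. reflexivity.
      - apply functional_extensionality; intros a. unfold upf_m, tm.
        rewrite ren_stk_ren_stk, stk_subst_ren, <- stk_ren_is_subst. reflexivity. }
    assert (HA : Fsub tf A = inst0 t (Fren (upren xf) (Fsub (fup sf) A))).
    { unfold inst0. rewrite Fren_Fsub, !Fsub_Fsub. rewrite <- Htf. f_equal.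
      apply functional_extensionality; intros n; unfold fcomp; rewrite fsub_fsub; reflexivity. }
    assert (HIH : GOOD fa ra G'' D'' (Fsub tf A) (subst tf tl tm M)).
    { apply IHtyp. split; [|split].
      - intros [|n]; auto. unfold tf, fcomp; simpl. rewrite <- fren_fsub. apply wf_fren. apply Hs.
      - intros n B Hn. rewrite nth_error_map in Hn.
        destruct (nth_error G n) eqn:En; simpl in Hn; inversion Hn; subst.
        assert (Fsub tf (shiftF f) = Fren xf (Fsub sf f)) as ->.
        { unfold shiftF, tf. rewrite Fren_Fsub, Fsub_Fsub, <- Fsub_ren_comp. f_equal. }
        eapply GOOD_mono; eauto. apply Hs; auto.
      - intros n B Hn. rewrite nth_error_map in Hn.
        destruct (nth_error D n) eqn:En; simpl in Hn; inversion Hn; subst.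
        assert (Fsub tf (shiftF f) = Fren xf (Fsub sf f)) as ->.
        { unfold shiftF, tf. rewrite Fren_Fsub, Fsub_Fsub, <- Fsub_ren_comp. f_equal. }
        eapply GS_mono; eauto. apply Hs; auto. }
    apply GOOD_unfold in HIH. destruct HIH as [_ HIH].
    destruct (HIH idn idn idn G'' D'' (ctx_ren_id _) (ctx_ren_id _) (F, e)) as (N0 & HN0 & HE0).
    { rewrite Fren_id, HA. exact HF. }
    rewrite ren_id in HE0. exists N0. split; auto.
    change (eqt fa ra G'' D'' (plug (F, e) (Inst (ren xf xl xm (subst sf sl sm (FLam M))) t)) N0 Bot).
    eapply eq_trans; [|exact HE0].
    eapply plug_eqt; [|apply GS_typ; exact HF].
    simpl ren. rewrite <- Hclaim. apply ax_theta.
    econstructor; auto.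
    change (FLam (ren (upren xf) xl xm (subst (fup sf) (upf_l sl) (upf_m sm) M))) with
        (ren xf xl xm (subst sf sl sm (FLam M))).
    eapply typ_ren in Ht; eauto. exact Ht.
  -
    simpl. rewrite Fsub_inst0. apply good_inst.
    + apply (IHtyp _ _ _ _ _ Hs).
    + apply wf_fsub; auto. apply Hs.
Qed.

End Fund.


Lemma can_Fsub Q : forall s, (canA Q -> canA (Fsub s Q)) /\ (canQ Q -> canQ (Fsub s Q)).
Proof.
  induction Q; intros s; split; intros H; simpl.
  - inversion H; subst; simpl in *; contradiction.
  - inversion H; subst. inversion H0; subst; simpl in *; contradiction.
  - constructor; simpl; auto.
  - constructor; constructor; simpl; auto.
  - constructor; simpl; auto.
  - constructor; constructor; simpl; auto.
  - inversion H; subst; simpl in *; [contradiction|].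
    constructor; [apply IHQ1|apply IHQ2]; auto.
  - inversion H; subst. inversion H0; subst; simpl in *; [contradiction|].
    constructor. constructor; [apply IHQ1|apply IHQ2]; auto.
  - inversion H; subst; simpl in *; contradiction.
  - inversion H; subst. inversion H0; subst; simpl in *; contradiction.
  - inversion H; subst; simpl in *; contradiction.
  - inversion H; subst.
    + inversion H0; subst; simpl in *; contradiction.
    + apply canQ_all. apply IHQ; auto.
Qed.

Lemma canQ_Fsub s Q : canQ Q -> canQ (Fsub s Q).
Proof. apply can_Fsub. Qed.
Lemma canQ_Fren xi Q : canQ Q -> canQ (Fren xi Q).
Proof. rewrite Fren_Fsub. apply canQ_Fsub. Qed.

Lemma canQ_inv Q : canQ Q ->
  match Q with
  | Bot | Atom _ _ => True
  | Imp Q1 A1 => canQ Q1 /\ canQ A1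
  | All Q1 => canQ Q1
  | _ => False
  end.
Proof.
  intros H. destruct H as [Q HA|Q HQ]; auto.
  destruct HA as [R HR|Q1 A1 HQ1 HA1].
  - destruct R; simpl in *; tauto.
  - split; auto. constructor; auto.
Qed.

Section Reify.
Variables fa ra : nat -> nat.

Definition reify_prop Q := forall G D M, GOOD fa ra G D Q M ->
  exists N, cnfQ fa G D N Q /\ eqt fa ra G D M N Q.
Definition reflect_prop Q := forall G D E, GS fa ra G D Q E -> forall h0 h b T0,
  nth_error G b = Some T0 ->
  (forall P S, spine fa G D h Q P S -> spine fa G D (Var b) T0 P S) ->
  eqt fa ra G D h0 h Q ->
  exists N, cnfQ fa G D N Bot /\ eqt fa ra G D (plug E h0) N Bot.

Lemma var_good G D b Q : nth_error G b = Some Q ->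
  (forall xf, reflect_prop (Fren xf Q)) -> GOOD fa ra G D Q (Var b).
Proof.
  intros Hb HR. apply GOOD_unfold. split. constructor; auto.
  intros xf xl xm G' D' HG HD E HE. simpl.
  eapply HR; eauto. apply eq_refl. constructor. apply HG; auto.
Qed.

Lemma RR n : forall Q, fsize Q <= n -> canQ Q -> wf_form fa ra Q -> reify_prop Q /\ reflect_prop Q.
Proof.
  induction n as [|n IH]; intros Q Hn Hc Hw.
  { pose proof (fsize_pos Q); lia. }
  pose proof (canQ_inv _ Hc) as Hi.
  destruct Q; try contradiction; simpl in Hn.
  - split.
    + intros G D M HM. apply GOOD_unfold in HM. destruct HM as [Ht Hg].
      destruct (Hg idn idn idn G D (ctx_ren_id _) (ctx_ren_id _) ([], None)) as (N & HN & HE).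
      { reflexivity. }
      rewrite ren_id in HE. exists N. split; auto.
    + intros G D E HE h0 h b T0 Hb Hsp Heq. apply GS_Bot in HE. subst E.
      exists h. split; auto.
      eapply cnf_bot; eauto. apply Hsp. constructor. simpl; auto. left; auto.
  - split.
    + intros G D M HM. apply GOOD_unfold in HM. destruct HM as [Ht Hg].
      destruct (Hg idn idn S G (Atom n0 l :: D) (ctx_ren_id _) (ctx_ren_S_l _ _) ([], Some 0))
        as (P & HP & HE).
      { rewrite Fren_id. apply GS_Atom. exists 0; auto. }
      inversion HP; subst. exists (Mu P). split.
      * eapply cnf_atom; eauto.
      * eapply eq_trans. apply eq_sym. apply ax_eta_mu. exact Ht.
        apply eq_mu; auto. rewrite tren_mu_ren. exact HE.
    + intros G D E HE h0 h b T0 Hb Hsp Heq. apply GS_Atom in HE. destruct HE as (beta & -> & Hbeta).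
      exists (Named beta h). split.
      * eapply cnf_bot; eauto. apply Hsp. constructor. simpl; auto. right. split. discriminate.
        exists beta; auto.
      * unfold plug; simpl. eapply eq_named; eauto.
  - destruct Hi as [Hc1 Hc2]. destruct Hw as [Hw1 Hw2].
    assert (IH1 : forall xf, reify_prop (Fren xf Q1) /\ reflect_prop (Fren xf Q1)).
    { intros xf. apply IH. rewrite fsize_Fren; lia. apply canQ_Fren; auto. apply wf_Fren; auto. }
    assert (IH2 : reify_prop Q2 /\ reflect_prop Q2) by (apply IH; auto; lia).
    split.
    + intros G D M HM.
      pose proof (GOOD_mono fa ra _ _ _ _ idn S idn (Q1 :: G) D HM (ctx_ren_S_l _ _) (ctx_ren_id _)) as HM'.
      rewrite Fren_id in HM'.
      assert (Hv : GOOD fa ra (Q1 :: G) D Q1 (Var 0)).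
      { apply var_good; auto. intros xf; apply IH1. }
      pose proof (good_app _ _ _ _ _ _ _ _ HM' Hv) as Happ.
      destruct (proj1 IH2 _ _ _ Happ) as (N & HN & HE).
      exists (Lam N). split. constructor; auto.
      eapply eq_trans. apply eq_sym. apply ax_eta. apply GOOD_typ with (fa := fa); exact HM.
      apply eq_lam; auto. rewrite tren_lam_ren. exact HE.
    + intros G D E HE h0 h b T0 Hb Hsp Heq. apply GS_Imp in HE.
      destruct HE as (N & F & HE & HN & HF). destruct E as [E1 e]; simpl in HE, HF; subst E1.
      rewrite <- (Fren_id Q1) in HN.
      destruct (proj1 (IH1 idn) _ _ _ HN) as (N' & HN' & HNE). rewrite Fren_id in HN', HNE.
      change (plug (FrA N :: F, e) h0) with (plug (F, e) (App h0 N)).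
      eapply (proj2 IH2); eauto.
      * intros P S Hs. apply Hsp. econstructor; eauto.
      * eapply eq_app; eauto.
  -
    assert (IH1 : forall s, (forall k, wf_fterm fa (s k)) -> reify_prop (Fsub s Q) /\ reflect_prop (Fsub s Q)).
    { intros s Hs. apply IH. rewrite fsize_Fsub; lia. apply canQ_Fsub; auto.
      apply wf_Fsub; auto. }
    split.
    + intros G D M HM.
      pose proof (GOOD_mono fa ra _ _ _ _ S idn idn (map shiftF G) (map shiftF D) HM
                    (ctx_ren_shiftF _) (ctx_ren_shiftF _)) as HM'.
      simpl in HM'.
      pose proof (good_inst _ _ _ _ _ _ (FVar 0) HM' I) as Hi'.
      rewrite inst0_shift_var in Hi'.
      destruct (IH1 FVar (fun _ => I)) as [IHr _]. rewrite Fsub_id in IHr.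
      destruct (IHr _ _ _ Hi') as (N & HN & HE).
      exists (FLam N). split. constructor; auto.
      eapply eq_trans. apply eq_sym. apply ax_eta_all. apply GOOD_typ with (fa := fa); exact HM.
      apply eq_flam. rewrite tren_fo_ren. exact HE.
    + intros G D E HE h0 h b T0 Hb Hsp Heq. apply GS_All in HE.
      destruct HE as (t & F & HE & Ht & HF). destruct E as [E1 e]; simpl in HE, HF; subst E1.
      change (plug (FrI t :: F, e) h0) with (plug (F, e) (Inst h0 t)).
      assert (Hs : forall k, wf_fterm fa (scons t FVar k)) by (intros [|k]; simpl; auto).
      eapply (proj2 (IH1 _ Hs)); eauto.
      * intros P S Hsp'. apply Hsp. econstructor; eauto.
      * eapply eq_inst; eauto.
Qed.

Lemma reify G D Q M : canQ Q -> wf_form fa ra Q -> GOOD fa ra G D Q M ->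
  exists N, cnfQ fa G D N Q /\ eqt fa ra G D M N Q.
Proof. intros Hc Hw HM. eapply (proj1 (RR (fsize Q) Q (le_n _) Hc Hw)); eauto. Qed.

End Reify.


Lemma canB_reify fa ra B : canB B -> forall M, wf_form fa ra B -> GOOD fa ra nil nil B M ->
  exists N, cnfB fa nil nil N B /\ eqt fa ra nil nil M N B.
Proof.
  induction 1 as [Q HQ|B Q HB IHB HQ]; intros M Hw HM.
  - destruct (reify fa ra nil nil Q M HQ Hw HM) as (N & HN & HE).
    exists N; split; auto. constructor; auto.
  - destruct Hw as [Hw1 Hw2].
    destruct (IHB (Pi1 M) Hw1 (good_pi1 _ _ _ _ _ _ _ HM)) as (N1 & HN1 & HE1).
    destruct (reify fa ra nil nil Q (Pi2 M) HQ Hw2 (good_pi2 _ _ _ _ _ _ _ HM)) as (N2 & HN2 & HE2).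
    exists (Pair N1 N2). split. apply cnfB_and; auto.
    eapply eq_trans. apply eq_sym. apply ax_surj. apply GOOD_typ with (fa := fa); exact HM.
    apply eq_pair; auto.
Qed.

Theorem mainTheorem4 (fa ra : nat -> nat) (C : formula) (M : term) :
  canC C ->
  typ fa ra nil nil M C ->
  exists N : term, cnfC fa nil nil N C /\ eqt fa ra nil nil M N C.
Proof.
  intros Hc Ht.
  assert (Hw : wf_form fa ra C).
  { eapply typ_wf; eauto; intros [|n] B Hn; simpl in Hn; discriminate. }
  assert (HG : GOOD fa ra nil nil C M).
  { pose proof (fund fa ra _ _ _ _ Ht nil nil FVar Var idstk) as H.
    rewrite Fsub_id, subst_id in H. apply H.
    split; [|split]; [intros; simpl; auto| |]; intros [|n] B Hn; simpl in Hn; discriminate. }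
  destruct Hc as [Hb | ->].
  - destruct (canB_reify fa ra C Hb M Hw HG) as (N & HN & HE).
    exists N. split; auto. right; auto.
  - exists Star. split. left; auto. apply eq_sym. apply ax_top. auto.
Qed.
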